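(* Let $F$ be a smooth strictly convex closed curve in the plane, traversed once, and let $r$ be the radius of its smallest osculating circle (i.e. $r=1/k_{\max}$, where $k_{\max}$ is the maximum curvature of $F$). If $\ell<r$, then the bicycle monodromy $M_F$ for the bicycle of length $\ell$ is hyperbolic.
   Context: Bicycle model: a segment $RF$ of fixed length $\ell$ moves in the plane ($F$ = front wheel, $R$ = rear wheel) subject to the constraint that the velocity of $R$ is always parallel to $RF$. For a closed front path, the bicycle monodromy $M_F$ is the self-map of the circle of radius $\ell$ sending the initial position of $R$ relative to $F$ to its terminal position; it is a Möbius transformation, called hyperbolic if it has two fixed points (one attracting, one repelling). *)

(* Defs.v *)
From Stdlib Require Import Reals Lra ClassicalEpsilon.
From Coquelicot Require Import Coquelicot.
Open Scope R_scope.

Definition smooth (f : R -> R) : Prop := forall (n : nat) (t : R), ex_derive_n f n t.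

Definition smooth_closed_curve (x y : R -> R) (T : R) : Prop :=
  0 < T /\ smooth x /\ smooth y /\
  (forall t, x (t + T) = x t /\ y (t + T) = y t) /\
  (forall t, Derive x t <> 0 \/ Derive y t <> 0).

Definition traversed_once (x y : R -> R) (T : R) : Prop :=
  forall s t, 0 <= s < T -> 0 <= t < T -> x s = x t -> y s = y t -> s = t.

(* strict convexity: at every point, every other point of the curve lies
   strictly on one (fixed) side of the tangent line *)
Definition strictly_convex (x y : R -> R) : Prop :=
  exists sigma : R, (sigma = 1 \/ sigma = -1) /\
    forall t s, (x s <> x t \/ y s <> y t) ->
      0 < sigma * (Derive x t * (y s - y t) - Derive y t * (x s - x t)).

Definition curvature (x y : R -> R) (t : R) : R :=
  let v2 := Derive x t ^ 2 + Derive y t ^ 2 in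
  Rabs (Derive x t * Derive_n y 2 t - Derive y t * Derive_n x 2 t) / (v2 * sqrt v2).

(* Rear wheel position when the unit vector from R to F is (cos th, sin th). *)
Definition rear_x (x : R -> R) (l : R) (th : R -> R) (t : R) : R := x t - l * cos (th t).
Definition rear_y (y : R -> R) (l : R) (th : R -> R) (t : R) : R := y t - l * sin (th t).

(* bicycle motion: |RF| = l (built in), th differentiable, and the velocity of R
   is parallel to RF = l (cos th, sin th). *)
Definition bicycle_motion (x y : R -> R) (l : R) (th : R -> R) : Prop :=
  (forall t, ex_derive th t) /\
  forall t, Derive (rear_x x l th) t * sin (th t)
            - Derive (rear_y y l th) t * cos (th t) = 0.

(* monodromy (in the angle coordinate th on the circle of radius l around F):
   initial angle th0 at time 0 |-> terminal angle at time T *)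
Definition monodromy_rel (x y : R -> R) (l T th0 th1 : R) : Prop :=
  exists th : R -> R, bicycle_motion x y l th /\ th 0 = th0 /\ th T = th1.

Definition monodromy (x y : R -> R) (l T : R) (th0 : R) : R :=
  epsilon (inhabits 0) (fun th1 => monodromy_rel x y l T th0 th1).

Definition circle_fixed (M : R -> R) (a : R) : Prop :=
  exists k : Z, M a = a + 2 * PI * IZR k.

Definition hyperbolic (M : R -> R) : Prop :=
  exists a b : R, 0 <= a < 2 * PI /\ 0 <= b < 2 * PI /\ a <> b /\
    circle_fixed M a /\ circle_fixed M b /\
    (forall c, 0 <= c < 2 * PI -> circle_fixed M c -> c = a \/ c = b) /\
    ex_derive M a /\ ex_derive M b /\
    Rabs (Derive M a) < 1 /\ 1 < Rabs (Derive M b).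

(* Main.v *)
Require Import Defs.
From Stdlib Require Import Reals Lra Lia ClassicalEpsilon Factorial ZArith FunctionalExtensionality.
From Coquelicot Require Import Coquelicot.
Open Scope R_scope.

Section P1sec.
Implicit Types (f g h dh df : R -> R) (x l a b k c : R).

Lemma D_eq f x l (l' : R) : is_derive f x l -> l = l' -> is_derive f x l'.
Proof. intros H ->; exact H. Qed.
Lemma D_plus f g x a b : is_derive f x a -> is_derive g x b ->
  is_derive (fun t => f t + g t) x (a + b).
Proof. intros; apply (is_derive_plus f g x a b); auto. Qed.
Lemma D_minus f g x a b : is_derive f x a -> is_derive g x b ->
  is_derive (fun t => f t - g t) x (a - b).
Proof. intros; apply (is_derive_minus f g x a b); auto. Qed.
Lemma D_mult f g x a b : is_derive f x a -> is_derive g x b ->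
  is_derive (fun t => f t * g t) x (a * g x + f x * b).
Proof. intros; apply (is_derive_mult f g x a b); auto. intros; apply Rmult_comm. Qed.
Lemma D_const (c : R) x : is_derive (fun _ => c) x 0.
Proof. apply (is_derive_const c x). Qed.
Lemma D_id x : is_derive (fun t => t) x 1.
Proof. apply (is_derive_id x). Qed.
Lemma D_cos f x a : is_derive f x a -> is_derive (fun t => cos (f t)) x (- sin (f x) * a).
Proof. intros H. pose proof (is_derive_comp cos f x _ _ (is_derive_cos (f x)) H) as H2.
  unfold scal in H2; simpl in H2; unfold mult in H2; simpl in H2. rewrite Rmult_comm. exact H2. Qed.
Lemma D_sin f x a : is_derive f x a -> is_derive (fun t => sin (f t)) x (cos (f x) * a).
Proof. intros H. pose proof (is_derive_comp sin f x _ _ (is_derive_sin (f x)) H) as H2.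
  unfold scal in H2; simpl in H2; unfold mult in H2; simpl in H2. rewrite Rmult_comm. exact H2. Qed.
Lemma D_exp f x a : is_derive f x a -> is_derive (fun t => exp (f t)) x (exp (f x) * a).
Proof. intros H. pose proof (is_derive_comp exp f x _ _ (is_derive_exp (f x)) H) as H2.
  unfold scal in H2; simpl in H2; unfold mult in H2; simpl in H2. rewrite Rmult_comm. exact H2. Qed.
Lemma D_pow f x a n : is_derive f x a ->
  is_derive (fun t => f t ^ n) x (INR n * a * f x ^ pred n).
Proof. apply is_derive_pow. Qed.
Lemma D_scal (k : R) f x a : is_derive f x a -> is_derive (fun t => k * f t) x (k * a).
Proof. apply is_derive_scal. Qed.
Lemma D_opp f x a : is_derive f x a -> is_derive (fun t => - f t) x (- a).
Proof. intros H; apply (is_derive_opp f x a H). Qed.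

Lemma mono_le (h dh : R -> R) a b : a <= b ->
  (forall s, a <= s <= b -> is_derive h s (dh s)) ->
  (forall s, a <= s <= b -> dh s <= 0) -> h b <= h a.
Proof.
  intros Hab Hd Hs. destruct (Req_dec a b) as [<-|Hne]; [lra|].
  destruct (MVT_cor2 h dh a b) as [c [Hc1 Hc2]]; [lra| |].
  - intros c Hc. apply is_derive_Reals. apply Hd; lra.
  - assert (dh c <= 0) by (apply Hs; lra). nra.
Qed.
Lemma mono_ge (h dh : R -> R) a b : a <= b ->
  (forall s, a <= s <= b -> is_derive h s (dh s)) ->
  (forall s, a <= s <= b -> 0 <= dh s) -> h a <= h b.
Proof.
  intros Hab Hd Hs. assert (- h b <= - h a); [|lra].
  apply (mono_le (fun t => - h t) (fun t => - dh t)); auto.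
  - intros; apply D_opp; auto.
  - intros s Hs'; specialize (Hs s Hs'); lra.
Qed.
Lemma mono_lt (h dh : R -> R) a b : a < b ->
  (forall s, a <= s <= b -> is_derive h s (dh s)) ->
  (forall s, a < s < b -> dh s < 0) -> h b < h a.
Proof.
  intros Hab Hd Hs.
  destruct (MVT_cor2 h dh a b) as [c [Hc1 Hc2]]; [lra| |].
  - intros c Hc. apply is_derive_Reals. apply Hd; lra.
  - assert (dh c < 0) by (apply Hs; lra). nra.
Qed.

Lemma poly_bound (f df : R -> R) (C : R) (n : nat) t : f 0 = 0 ->
  (forall s, Rabs s <= Rabs t -> is_derive f s (df s)) ->
  (forall s, Rabs s <= Rabs t -> Rabs (df s) <= C * Rabs s ^ n) ->
  Rabs (f t) <= C * Rabs t ^ (S n) / INR (S n).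
Proof.
  intros H0 Hd Hb. assert (HS : 0 < INR (S n)) by (apply lt_0_INR; lia).
  destruct (Rle_or_lt 0 t) as [Ht|Ht].
  - set (P := fun s => (C / INR (S n)) * s ^ (S n)).
    assert (HP : forall s, is_derive P s (C * s ^ n)).
    { intros s. unfold P. eapply D_eq.
      apply (D_scal (C / INR (S n)) (fun s => s ^ S n)), (D_pow (fun t => t)), D_id.
      simpl pred. field. lra. }
    assert (forall s, 0 <= s <= t -> Rabs s <= Rabs t).
    { intros s Hs; rewrite !Rabs_pos_eq; lra. }
    assert (E1 : f t - P t <= f 0 - P 0).
    { apply (mono_le (fun s => f s - P s) (fun s => df s - C * s ^ n)); try lra.
      - intros s Hs; apply D_minus; [apply Hd, H; auto|apply HP].
      - intros s Hs. specialize (Hb s (H s Hs)). rewrite (Rabs_pos_eq s) in Hb by lra.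
        apply Rabs_le_between in Hb. lra. }
    assert (E2 : - f t - P t <= - f 0 - P 0).
    { apply (mono_le (fun s => - f s - P s) (fun s => - df s - C * s ^ n)); try lra.
      - intros s Hs; apply D_minus; [apply D_opp; apply Hd, H; auto|apply HP].
      - intros s Hs. specialize (Hb s (H s Hs)). rewrite (Rabs_pos_eq s) in Hb by lra.
        apply Rabs_le_between in Hb. lra. }
    unfold P in *. rewrite H0 in *. rewrite (Rabs_pos_eq t) by lra.
    replace (0 ^ S n) with 0 in * by (simpl; ring).
    apply Rabs_le_between. unfold Rdiv in *. lra.
  - set (P := fun s => (C / INR (S n)) * (- s) ^ (S n)).
    assert (HP : forall s, is_derive P s (- (C * (- s) ^ n))).
    { intros s. unfold P. eapply D_eq.
      apply (D_scal (C / INR (S n)) (fun s => (- s) ^ S n)), (D_pow (fun t => - t)), D_opp, D_id.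
      simpl pred. field. lra. }
    assert (forall s, t <= s <= 0 -> Rabs s <= Rabs t).
    { intros s Hs; rewrite !Rabs_left1; lra. }
    assert (E1 : f t - P t <= f 0 - P 0).
    { apply (mono_ge (fun s => f s - P s) (fun s => df s - - (C * (- s) ^ n))); try lra.
      - intros s Hs; apply D_minus; [apply Hd, H; lra|apply HP].
      - intros s Hs. specialize (Hb s (H s Hs)). rewrite (Rabs_left1 s) in Hb by lra.
        apply Rabs_le_between in Hb. lra. }
    assert (E2 : - f t - P t <= - f 0 - P 0).
    { apply (mono_ge (fun s => - f s - P s) (fun s => - df s - - (C * (- s) ^ n))); try lra.
      - intros s Hs; apply D_minus; [apply D_opp; apply Hd, H; lra|apply HP].
      - intros s Hs. specialize (Hb s (H s Hs)). rewrite (Rabs_left1 s) in Hb by lra.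
        apply Rabs_le_between in Hb. lra. }
    unfold P in *. rewrite H0 in *. rewrite (Rabs_left1 t) by lra.
    replace ((- 0) ^ S n) with 0 in * by (simpl; ring).
    apply Rabs_le_between. unfold Rdiv in *. lra.
Qed.

End P1sec.

Lemma abs_sin_le s : Rabs (sin s) <= Rabs s.
Proof.
  assert (H := poly_bound sin cos 1 0 s). rewrite sin_0 in H.
  assert (E : Rabs (sin s) <= 1 * Rabs s ^ 1 / INR 1).
  { apply H; auto. intros; apply is_derive_sin.
    intros; simpl. pose proof (COS_bound s0). apply Rabs_le. lra. }
  simpl in E. lra.
Qed.

Lemma lip_cos u v : Rabs (cos u - cos v) <= Rabs (u - v).
Proof.
  assert (H := poly_bound (fun s => cos (v + s) - cos v) (fun s => - sin (v + s)) 1 0 (u - v)).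
  simpl in H. replace (v + (u - v)) with u in H by ring.
  assert (E : Rabs (cos u - cos v) <= 1 * (Rabs (u - v) * 1) / 1); [|lra].
  apply H.
  - rewrite Rplus_0_r; ring.
  - intros s _. eapply D_eq. apply D_minus; [apply D_cos|apply D_const].
    eapply D_eq; [apply D_plus; [apply D_const|apply D_id]|reflexivity]. ring.
  - intros. pose proof (SIN_bound (v + s)). rewrite Rabs_Ropp. apply Rabs_le. lra.
Qed.

Lemma lip_sin u v : Rabs (sin u - sin v) <= Rabs (u - v).
Proof.
  assert (H := poly_bound (fun s => sin (v + s) - sin v) (fun s => cos (v + s)) 1 0 (u - v)).
  simpl in H. replace (v + (u - v)) with u in H by ring.
  assert (E : Rabs (sin u - sin v) <= 1 * (Rabs (u - v) * 1) / 1); [|lra].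
  apply H.
  - rewrite Rplus_0_r; ring.
  - intros s _. eapply D_eq. apply D_minus; [apply D_sin|apply D_const].
    eapply D_eq; [apply D_plus; [apply D_const|apply D_id]|reflexivity]. ring.
  - intros. pose proof (COS_bound (v + s)). apply Rabs_le. lra.
Qed.

Lemma cos1_le s : Rabs (cos s - 1) <= s ^ 2 / 2.
Proof.
  assert (H := poly_bound (fun s => cos s - 1) (fun s => - sin s) 1 1 s).
  assert (E : Rabs (cos s - 1) <= 1 * Rabs s ^ 2 / INR 2).
  { apply H. rewrite cos_0; ring.
    - intros. eapply D_eq. apply D_minus; [apply (D_cos (fun t => t)), D_id|apply D_const]. ring.
    - intros. rewrite Rabs_Ropp. pose proof (abs_sin_le s0). simpl; lra. }
  replace (Rabs s ^ 2) with (s ^ 2) in E. simpl in E. lra.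
  simpl. rewrite !Rmult_1_r. rewrite <- Rabs_mult. symmetry; apply Rabs_pos_eq. nra.
Qed.

Lemma cos1_le_abs s : Rabs (cos s - 1) <= Rabs s.
Proof.
  pose proof (cos1_le s). pose proof (COS_bound s).
  destruct (Rle_or_lt (Rabs s) 2).
  - assert (s ^ 2 = Rabs s * Rabs s). { simpl. rewrite <- Rabs_mult. rewrite Rabs_pos_eq; nra. }
    pose proof (Rabs_pos s). nra.
  - apply Rabs_le. lra.
Qed.

Lemma sin1_le s : Rabs (sin s - s) <= s ^ 2 / 2.
Proof.
  assert (H := poly_bound (fun s => sin s - s) (fun s => cos s - 1) 1 1 s).
  assert (E : Rabs (sin s - s) <= 1 * Rabs s ^ 2 / INR 2).
  { apply H. rewrite sin_0; ring.
    - intros. eapply D_eq. apply D_minus; [apply (D_sin (fun t => t)), D_id|apply D_id]. ring.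
    - intros. pose proof (cos1_le_abs s0). simpl; lra. }
  replace (Rabs s ^ 2) with (s ^ 2) in E. simpl in E. lra.
  simpl. rewrite !Rmult_1_r. rewrite <- Rabs_mult. symmetry; apply Rabs_pos_eq. nra.
Qed.

Fixpoint pic (G : R -> R -> R) (c : R) (n : nat) : R -> R :=
  match n with
  | O => fun _ => c
  | S m => fun t => c + RInt (fun s => G s (pic G c m s)) 0 t
  end.

Lemma deriv_RInt0 (h : R -> R) t : (forall z, continuous h z) ->
  is_derive (fun u => RInt h 0 u) t (h t).
Proof.
  intros Hc. apply (is_derive_RInt h (fun u => RInt h 0 u) 0 t).
  - apply filter_forall. intros b. apply (@RInt_correct R_CompleteNormedModule). apply (@ex_RInt_continuous R_CompleteNormedModule).
    intros; apply Hc.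
  - apply Hc.
Qed.


Lemma pic_props (G : R -> R -> R) c :
  (forall phi : R -> R, (forall t, continuous phi t) -> forall t, continuous (fun s => G s (phi s)) t) ->
  forall n, (forall t, continuous (pic G c n) t) /\
            (forall t, is_derive (pic G c (S n)) t (G t (pic G c n t))).
Proof.
  intros HG. induction n as [|n [IHc IHd]].
  - split. intros t; apply continuous_const.
    intros t. simpl. eapply D_eq. apply D_plus. apply D_const.
    apply deriv_RInt0. apply HG. intros; apply continuous_const. ring.
  - assert (Hc : forall t, continuous (pic G c (S n)) t).
    { intros t. apply (@ex_derive_continuous R_AbsRing R_NormedModule). eexists; apply IHd. }
    split. exact Hc.
    intros t. change (pic G c (S (S n))) with (fun t => c + RInt (fun s => G s (pic G c (S n) s)) 0 t).
    eapply D_eq. apply D_plus. apply D_const. apply deriv_RInt0. apply HG. exact Hc. ring.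
Qed.

Lemma pic_0 G c n : pic G c n 0 = c.
Proof. destruct n; simpl; auto. rewrite RInt_point. unfold zero; simpl; ring. Qed.

Lemma pic_bound (G : R -> R -> R) c r K :
  (forall phi : R -> R, (forall t, continuous phi t) -> forall t, continuous (fun s => G s (phi s)) t) ->
  0 <= K ->
  (forall t u v, Rabs t <= r -> Rabs (G t u) <= K /\ Rabs (G t u - G t v) <= K * Rabs (u - v)) ->
  forall n t, Rabs t <= r ->
    Rabs (pic G c (S n) t - pic G c n t) <= K ^ (S n) * Rabs t ^ (S n) / INR (fact (S n)).
Proof.
  intros HG HK0 HKb. induction n as [|n IH]; intros t Ht.
  - assert (E := poly_bound (fun t => pic G c 1 t - pic G c 0 t) (fun s => G s c - 0) K 0 t).
    assert (E2 : Rabs (pic G c 1 t - pic G c 0 t) <= K * Rabs t ^ 1 / INR 1).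
    { apply E.
    + simpl. rewrite RInt_point. unfold zero; simpl; ring.
    + intros s _. apply D_minus. apply (proj2 (pic_props G c HG 0) s). apply D_const.
    + intros s Hs. rewrite Rminus_0_r. simpl; rewrite Rmult_1_r. apply (HKb s c c). lra. }
    eapply Rle_trans; [exact E2|]. right. simpl. field.
  - assert (Hf1 : (0 < INR (fact (S n)))%R) by (apply lt_0_INR, lt_O_fact).
    assert (E := poly_bound (fun t => pic G c (S (S n)) t - pic G c (S n) t)
        (fun s => G s (pic G c (S n) s) - G s (pic G c n s)) (K ^ (S (S n)) / INR (fact (S n))) (S n) t).
    assert (E2 : Rabs (pic G c (S (S n)) t - pic G c (S n) t) <=
       K ^ (S (S n)) / INR (fact (S n)) * Rabs t ^ (S (S n)) / INR (S (S n))).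
    { apply E.
      + rewrite !pic_0; ring.
      + intros s _. apply D_minus. apply (proj2 (pic_props G c HG (S n)) s). apply (proj2 (pic_props G c HG n) s).
      + intros s Hs. destruct (HKb s (pic G c (S n) s) (pic G c n s)) as [_ H2]; [lra|].
        eapply Rle_trans; [apply H2|]. specialize (IH s ltac:(lra)).
        replace (K ^ S (S n) / INR (fact (S n)) * Rabs s ^ S n) with
          (K * (K ^ S n * Rabs s ^ S n / INR (fact (S n)))) by (change (K ^ S (S n)) with (K * K ^ S n); field; lra).
        apply Rmult_le_compat_l; auto. }
    eapply Rle_trans; [apply E2|]. right.
    rewrite (fact_simpl (S n)), mult_INR. field. split; [lra|]. apply not_0_INR; lia.
Qed.

Lemma SP_pic (G : R -> R -> R) c N t :
  SP (fun k t => pic G c (S k) t - pic G c k t) N t = pic G c (S N) t - c.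
Proof.
  induction N as [|N IH].
  - unfold SP; simpl. ring.
  - unfold SP in *. rewrite tech5, IH. ring.
Qed.

Lemma exp_tail_cv x l : 0 <= x -> exp_in x l ->
  Un_cv (fun n => sum_f_R0 (fun k => Rabs (x ^ (S k) / INR (fact (S k)))) n) (l - 1).
Proof.
  intros Hx Hl.
  assert (E : forall n, sum_f_R0 (fun k => Rabs (x ^ (S k) / INR (fact (S k)))) n =
     sum_f_R0 (fun i => / INR (fact i) * x ^ i) (S n) - 1).
  { induction n as [|n IH].
    - simpl. rewrite Rabs_pos_eq. field. simpl; lra.
    - rewrite tech5, IH. rewrite (tech5 _ (S n)).
      rewrite Rabs_pos_eq. unfold Rdiv. ring.
      apply Rmult_le_pos. apply pow_le; auto. left; apply Rinv_0_lt_compat, lt_0_INR, lt_O_fact. }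
  intros eps Heps. destruct (Hl eps Heps) as [N HN]. exists N. intros n Hn.
  rewrite E. unfold Rdist in *. replace (sum_f_R0 (fun i : nat => / INR (fact i) * x ^ i) (S n) - 1 - (l - 1))
    with (sum_f_R0 (fun i : nat => / INR (fact i) * x ^ i) (S n) - l) by ring.
  apply HN. lia.
Qed.

Lemma SFL_spec fn cv x : Un_cv (fun N => SP fn N x) (SFL fn cv x).
Proof. unfold SFL. destruct (cv x) as [l Hl]. exact Hl. Qed.

Lemma picard_exists (G : R -> R -> R) :
  (forall phi : R -> R, (forall t, continuous phi t) -> forall t, continuous (fun s => G s (phi s)) t) ->
  (forall r, 0 < r -> exists K, 0 <= K /\ forall t u v, Rabs t <= r ->
       Rabs (G t u) <= K /\ Rabs (G t u - G t v) <= K * Rabs (u - v)) ->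
  forall c, exists th : R -> R, th 0 = c /\ forall t, is_derive th t (G t (th t)).
Proof.
  intros HG HB c.
  set (fn := fun k t => pic G c (S k) t - pic G c k t).
  assert (Kr : forall r : posreal, {K | 0 <= K /\ forall t u v, Rabs t <= r ->
       Rabs (G t u) <= K /\ Rabs (G t u - G t v) <= K * Rabs (u - v)}).
  { intros r. apply constructive_indefinite_description. apply HB. apply cond_pos. }
  assert (CVN : CVN_R fn).
  { intros r. destruct (Kr r) as [K [HK0 HK]].
    exists (fun k => (K * r) ^ (S k) / INR (fact (S k))).
    destruct (exist_exp (K * r)) as [l Hl].
    exists (l - 1). split.
    - apply exp_tail_cv; auto. apply Rmult_le_pos; auto. left; apply cond_pos.
    - intros n y Hy. unfold Boule in Hy. rewrite Rminus_0_r in Hy.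
      eapply Rle_trans. apply (pic_bound G c r K HG HK0 HK n y). lra.
      rewrite Rpow_mult_distr. unfold Rdiv. apply Rmult_le_compat_r.
      left; apply Rinv_0_lt_compat, lt_0_INR, lt_O_fact.
      apply Rmult_le_compat_l. apply pow_le; auto. apply pow_incr. split; [apply Rabs_pos|lra]. }
  set (cv := CVN_R_CVS fn CVN).
  exists (fun t => c + SFL fn cv t). split.
  - assert (H0 : SFL fn cv 0 = 0).
    { apply (UL_sequence (fun N => SP fn N 0)). apply SFL_spec.
      intros eps Heps. exists O. intros n _. unfold fn. rewrite SP_pic, pic_0.
      unfold Rdist. rewrite Rminus_diag, Rminus_0_r, Rabs_R0. lra. }
    rewrite H0; ring.
  - intros t. apply is_derive_Reals.
    assert (Hr : 0 < Rabs t + 1) by (pose proof (Rabs_pos t); lra).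
    set (r := mkposreal _ Hr).
    apply (CVU_derivable (fun n => pic G c (S n)) (fun n s => G s (pic G c n s))
            (fun t => c + SFL fn cv t) (fun s => G s (c + SFL fn cv s)) 0 r).
    + intros eps Heps. destruct (Kr r) as [K [HK0 HK]].
      destruct (CVN_CVU fn cv r (CVN r) (eps / (K + 1))) as [N HN].
      { apply Rdiv_lt_0_compat; lra. }
      exists (S N). intros n y Hn Hy. destruct n as [|m]; [lia|].
      assert (Hy' : Rabs y <= r). { unfold Boule in Hy. rewrite Rminus_0_r in Hy. lra. }
      destruct (HK y (c + SFL fn cv y) (pic G c (S m) y) Hy') as [_ H2].
      eapply Rle_lt_trans; [apply H2|].
      specialize (HN m y ltac:(lia) Hy). unfold fn in HN at 2. rewrite SP_pic in HN.
      replace (c + SFL fn cv y - pic G c (S m) y) with (SFL fn cv y - (pic G c (S m) y - c)) by ring.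
      apply Rle_lt_trans with (K * (eps / (K + 1))).
      apply Rmult_le_compat_l; auto. left; exact HN.
      apply Rlt_le_trans with ((K + 1) * (eps / (K + 1))). apply Rmult_lt_compat_r.
      apply Rdiv_lt_0_compat; lra. lra. right; field; lra.
    + intros x _. intros eps Heps. destruct (SFL_spec fn cv x eps Heps) as [N HN].
      exists N. intros n Hn. specialize (HN n Hn). unfold fn in HN. rewrite SP_pic in HN.
      unfold Rdist in *. replace (pic G c (S n) x - (c + SFL fn cv x)) with
        (pic G c (S n) x - c - SFL fn cv x) by ring. exact HN.
    + intros n x _. apply is_derive_Reals. apply (proj2 (pic_props G c HG n) x).
    + unfold Boule. rewrite Rminus_0_r. simpl. lra.
Qed.

Definition Gf (A B : R -> R) (t th : R) : R := A t * cos th + B t * sin th.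
Definition Gd (A B : R -> R) (t th : R) : R := - A t * sin th + B t * cos th.

Definition ctsR (A : R -> R) := forall t, continuous A t.

Lemma cts_cont_pt (f : R -> R) t : continuous f t -> continuity_pt f t.
Proof. intros H. apply continuity_pt_filterlim. exact H. Qed.

Lemma cts_comp_cos (phi : R -> R) : ctsR phi -> ctsR (fun s => cos (phi s)).
Proof. intros H t. apply (continuous_comp phi cos). apply H.
  apply continuity_pt_filterlim. apply continuity_cos. Qed.
Lemma cts_comp_sin (phi : R -> R) : ctsR phi -> ctsR (fun s => sin (phi s)).
Proof. intros H t. apply (continuous_comp phi sin). apply H.
  apply continuity_pt_filterlim. apply continuity_sin. Qed.
Lemma cts_plus (f g : R -> R) : ctsR f -> ctsR g -> ctsR (fun s => f s + g s).
Proof. intros H1 H2 t. apply (continuous_plus f g). apply H1. apply H2. Qed.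
Lemma cts_mult (f g : R -> R) : ctsR f -> ctsR g -> ctsR (fun s => f s * g s).
Proof. intros H1 H2 t. apply (continuous_mult f g). apply H1. apply H2. Qed.
Lemma cts_opp (f : R -> R) : ctsR f -> ctsR (fun s => - f s).
Proof. intros H1 t. apply (continuous_opp f). apply H1. Qed.
Lemma cts_abs (f : R -> R) : ctsR f -> ctsR (fun s => Rabs (f s)).
Proof. intros H1 t. apply (continuous_comp f Rabs). apply H1. apply continuous_Rabs. Qed.
Lemma cts_deriv (f df : R -> R) : (forall t, is_derive f t (df t)) -> ctsR f.
Proof. intros H t. apply (@ex_derive_continuous R_AbsRing R_NormedModule). eexists; apply H. Qed.

Lemma G_cont A B : ctsR A -> ctsR B ->
  forall phi : R -> R, (forall t, continuous phi t) -> forall t, continuous (fun s => Gf A B s (phi s)) t.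
Proof.
  intros HA HB phi Hphi. unfold Gf. apply cts_plus; apply cts_mult; auto.
  apply cts_comp_cos; auto. apply cts_comp_sin; auto.
Qed.

Lemma bound_on (f : R -> R) a b : ctsR f -> exists K, 0 <= K /\ forall t, a <= t <= b -> Rabs (f t) <= K.
Proof.
  intros Hf. destruct (Rle_or_lt a b) as [Hab|Hab].
  - destruct (continuity_ab_maj (fun t => Rabs (f t)) a b Hab) as [M [HM _]].
    { intros c _. apply cts_cont_pt. apply cts_abs; auto. }
    exists (Rabs (f M)). split. apply Rabs_pos. intros t Ht. apply HM; auto.
  - exists 0. split. lra. intros; lra.
Qed.

Lemma trig_bound C S p q : Rabs C <= 1 -> Rabs S <= 1 -> Rabs (C * p - S * q) <= Rabs p + Rabs q.
Proof.
  intros HC HS. eapply Rle_trans. apply Rabs_triang. rewrite Rabs_Ropp, !Rabs_mult.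
  pose proof (Rabs_pos p). pose proof (Rabs_pos q). nra.
Qed.

Lemma abs_cos_le1 x : Rabs (cos x) <= 1.
Proof. pose proof (COS_bound x). apply Rabs_le. lra. Qed.
Lemma abs_sin_le1 x : Rabs (sin x) <= 1.
Proof. pose proof (SIN_bound x). apply Rabs_le. lra. Qed.

Lemma G_bounds A B t u v :
  Rabs (Gf A B t u) <= Rabs (A t) + Rabs (B t) /\
  Rabs (Gf A B t u - Gf A B t v) <= (Rabs (A t) + Rabs (B t)) * Rabs (u - v).
Proof.
  unfold Gf. split.
  - eapply Rle_trans. apply Rabs_triang. rewrite !Rabs_mult.
    pose proof (abs_cos_le1 u). pose proof (abs_sin_le1 u).
    pose proof (Rabs_pos (A t)). pose proof (Rabs_pos (B t)). nra.
  - replace (A t * cos u + B t * sin u - (A t * cos v + B t * sin v)) with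
      (A t * (cos u - cos v) + B t * (sin u - sin v)) by ring.
    eapply Rle_trans. apply Rabs_triang. rewrite !Rabs_mult.
    pose proof (lip_cos u v). pose proof (lip_sin u v).
    pose proof (Rabs_pos (A t)). pose proof (Rabs_pos (B t)). nra.
Qed.

Lemma G_taylor A B t th d :
  Rabs (Gf A B t (th + d) - Gf A B t th - Gd A B t th * d) <= (Rabs (A t) + Rabs (B t)) * d ^ 2.
Proof.
  unfold Gf, Gd. rewrite cos_plus, sin_plus.
  replace (A t * (cos th * cos d - sin th * sin d) + B t * (sin th * cos d + cos th * sin d) -
     (A t * cos th + B t * sin th) - (- A t * sin th + B t * cos th) * d) with
   (A t * (cos th * (cos d - 1) - sin th * (sin d - d)) +
    B t * (sin th * (cos d - 1) - (- cos th) * (sin d - d))) by ring.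
  eapply Rle_trans. apply Rabs_triang. rewrite !Rabs_mult.
  pose proof (trig_bound (cos th) (sin th) (cos d - 1) (sin d - d) (abs_cos_le1 _) (abs_sin_le1 _)).
  assert (Rabs (- cos th) <= 1) by (rewrite Rabs_Ropp; apply abs_cos_le1).
  pose proof (trig_bound (sin th) (- cos th) (cos d - 1) (sin d - d) (abs_sin_le1 _) H0).
  pose proof (cos1_le d). pose proof (sin1_le d).
  pose proof (Rabs_pos (A t)). pose proof (Rabs_pos (B t)).
  assert (Rabs (cos d - 1) + Rabs (sin d - d) <= d ^ 2) by lra.
  nra.
Qed.

Lemma G_HB A B : ctsR A -> ctsR B ->
  forall r, 0 < r -> exists K, 0 <= K /\ forall t u v, Rabs t <= r ->
       Rabs (Gf A B t u) <= K /\ Rabs (Gf A B t u - Gf A B t v) <= K * Rabs (u - v).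
Proof.
  intros HA HB r Hr. destruct (bound_on (fun t => Rabs (A t) + Rabs (B t)) (- r) r) as [K [HK0 HK]].
  { apply cts_plus; apply cts_abs; auto. }
  exists K. split; auto. intros t u v Ht. apply Rabs_le_between in Ht.
  specialize (HK t Ht). rewrite Rabs_pos_eq in HK by (pose proof (Rabs_pos (A t)); pose proof (Rabs_pos (B t)); lra).
  destruct (G_bounds A B t u v) as [H1 H2]. split. lra.
  eapply Rle_trans. apply H2. apply Rmult_le_compat_r. apply Rabs_pos. auto.
Qed.

Definition is_sol A B (th : R -> R) := forall t, is_derive th t (Gf A B t (th t)).

Definition sol A B (c : R) : R -> R :=
  epsilon (inhabits (fun _ => 0)) (fun th => th 0 = c /\ is_sol A B th).

Lemma sol_spec A B c : ctsR A -> ctsR B -> sol A B c 0 = c /\ is_sol A B (sol A B c).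
Proof.
  intros HA HB. unfold sol. apply epsilon_spec.
  apply (picard_exists (Gf A B) (G_cont A B HA HB) (G_HB A B HA HB) c).
Qed.

Lemma sol_unique A B th1 th2 s t : ctsR A -> ctsR B -> is_sol A B th1 -> is_sol A B th2 ->
  th1 s = th2 s -> th1 t = th2 t.
Proof.
  intros HA HB H1 H2 Hs.
  destruct (G_HB A B HA HB (Rabs s + Rabs t + 1)) as [K [HK0 HK]].
  { pose proof (Rabs_pos s); pose proof (Rabs_pos t); lra. }
  set (u := fun τ => (th1 τ - th2 τ) ^ 2).
  assert (Hu : forall τ, is_derive u τ (2 * (th1 τ - th2 τ) * (Gf A B τ (th1 τ) - Gf A B τ (th2 τ)))).
  { intros τ. unfold u. eapply D_eq. apply (D_pow (fun τ => th1 τ - th2 τ)). apply D_minus; auto.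
    simpl; ring. }
  assert (Hbd : forall τ, Rmin s t <= τ <= Rmax s t ->
     Rabs (2 * (th1 τ - th2 τ) * (Gf A B τ (th1 τ) - Gf A B τ (th2 τ))) <= 2 * K * u τ).
  { intros τ Hτ. assert (Rabs τ <= Rabs s + Rabs t + 1).
    { apply Rabs_le_between. unfold Rmin, Rmax in Hτ.
      pose proof (Rle_abs s); pose proof (Rle_abs t); pose proof (Rabs_maj2 s); pose proof (Rabs_maj2 t).
      destruct (Rle_dec s t); split; lra. }
    destruct (HK τ (th1 τ) (th2 τ) H) as [_ HL].
    rewrite !Rabs_mult. unfold u. rewrite Rabs_pos_eq by lra.
    replace ((th1 τ - th2 τ) ^ 2) with (Rabs (th1 τ - th2 τ) * Rabs (th1 τ - th2 τ)).
    pose proof (Rabs_pos (th1 τ - th2 τ)). nra.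
    rewrite <- Rabs_mult. rewrite Rabs_pos_eq by (apply Rle_0_sqr). ring. }
  assert (Hut : u t <= 0).
  { destruct (Rle_or_lt s t) as [Hst|Hst].
    - assert (u t * exp (- (2 * K) * t) <= u s * exp (- (2 * K) * s)).
      { apply (mono_le (fun τ => u τ * exp (- (2 * K) * τ))
          (fun τ => (2 * (th1 τ - th2 τ) * (Gf A B τ (th1 τ) - Gf A B τ (th2 τ))) * exp (- (2 * K) * τ)
                    + u τ * (exp (- (2 * K) * τ) * (- (2 * K))))); auto.
        - intros τ _. apply (D_mult u (fun τ => exp (- (2 * K) * τ))). auto. eapply D_eq. apply (D_exp (fun τ => - (2 * K) * τ)). apply (D_scal (- (2 * K)) (fun t => t)), D_id. ring.
        - intros τ Hτ. rewrite Rmin_left, Rmax_right in Hbd by lra. specialize (Hbd τ Hτ).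
          apply Rabs_le_between in Hbd. pose proof (exp_pos (- (2 * K) * τ)). nra. }
      unfold u at 2 in H. rewrite Hs in H. replace ((th2 s - th2 s) ^ 2) with 0 in H by ring.
      pose proof (exp_pos (- (2 * K) * t)). nra.
    - assert (u t * exp ((2 * K) * t) <= u s * exp ((2 * K) * s)).
      { apply (mono_ge (fun τ => u τ * exp ((2 * K) * τ))
          (fun τ => (2 * (th1 τ - th2 τ) * (Gf A B τ (th1 τ) - Gf A B τ (th2 τ))) * exp ((2 * K) * τ)
                    + u τ * (exp ((2 * K) * τ) * (2 * K)))); try lra.
        - intros τ _. apply (D_mult u (fun τ => exp ((2 * K) * τ))). auto. eapply D_eq. apply (D_exp (fun τ => (2 * K) * τ)). apply (D_scal (2 * K) (fun t => t)), D_id. ring.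
        - intros τ Hτ. rewrite Rmin_right, Rmax_left in Hbd by lra. specialize (Hbd τ Hτ).
          apply Rabs_le_between in Hbd. pose proof (exp_pos ((2 * K) * τ)). nra. }
      unfold u at 2 in H. rewrite Hs in H. replace ((th2 s - th2 s) ^ 2) with 0 in H by ring.
      pose proof (exp_pos ((2 * K) * t)). nra. }
  unfold u in Hut. assert ((th1 t - th2 t) ^ 2 = 0) by (pose proof (pow2_ge_0 (th1 t - th2 t)); lra).
  assert (th1 t - th2 t = 0) by nra. lra.
Qed.

Lemma Kbound A B T : ctsR A -> ctsR B ->
  exists K, 0 <= K /\ forall t, Rabs t <= T -> Rabs (A t) + Rabs (B t) <= K.
Proof.
  intros HA HB. destruct (bound_on (fun t => Rabs (A t) + Rabs (B t)) (- T) T) as [K [HK0 HK]].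
  { apply cts_plus; apply cts_abs; auto. }
  exists K. split; auto. intros t Ht. apply Rabs_le_between in Ht. specialize (HK t Ht).
  rewrite Rabs_pos_eq in HK; auto. pose proof (Rabs_pos (A t)); pose proof (Rabs_pos (B t)); lra.
Qed.

Lemma Gd_bound A B t u : Rabs (Gd A B t u) <= Rabs (A t) + Rabs (B t).
Proof.
  unfold Gd. eapply Rle_trans. apply Rabs_triang. rewrite !Rabs_mult, Rabs_Ropp.
  pose proof (abs_cos_le1 u). pose proof (abs_sin_le1 u).
  pose proof (Rabs_pos (A t)). pose proof (Rabs_pos (B t)). nra.
Qed.

Lemma gronwall A B T K th1 th2 t : ctsR A -> ctsR B -> is_sol A B th1 -> is_sol A B th2 ->
  0 <= K -> (forall s, Rabs s <= T -> Rabs (A s) + Rabs (B s) <= K) -> 0 <= t <= T ->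
  (th1 t - th2 t) ^ 2 <= (th1 0 - th2 0) ^ 2 * exp (2 * K * t).
Proof.
  intros HA HB H1 H2 HK0 HK Ht.
  set (u := fun τ => (th1 τ - th2 τ) ^ 2).
  assert (Hu : forall τ, is_derive u τ (2 * (th1 τ - th2 τ) * (Gf A B τ (th1 τ) - Gf A B τ (th2 τ)))).
  { intros τ. unfold u. eapply D_eq. apply (D_pow (fun τ => th1 τ - th2 τ)). apply D_minus; auto.
    simpl; ring. }
  assert (Hbd : forall τ, 0 <= τ <= t ->
     2 * (th1 τ - th2 τ) * (Gf A B τ (th1 τ) - Gf A B τ (th2 τ)) <= 2 * K * u τ).
  { intros τ Hτ. assert (Rabs τ <= T) by (rewrite Rabs_pos_eq; lra).
    destruct (G_bounds A B τ (th1 τ) (th2 τ)) as [_ HL]. specialize (HK τ H).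
    assert (HL' : Rabs (Gf A B τ (th1 τ) - Gf A B τ (th2 τ)) <= K * Rabs (th1 τ - th2 τ)).
    { eapply Rle_trans; [apply HL|]. apply Rmult_le_compat_r; auto. apply Rabs_pos. }
    set (d := th1 τ - th2 τ) in *. set (e := Gf A B τ (th1 τ) - Gf A B τ (th2 τ)) in *.
    unfold u. fold d.
    assert (d * e <= Rabs d * Rabs e). { rewrite <- Rabs_mult. apply Rle_abs. }
    assert (Rabs d * Rabs d = d ^ 2). { rewrite <- Rabs_mult. simpl. rewrite Rmult_1_r. apply Rabs_pos_eq. nra. }
    pose proof (Rabs_pos d). nra. }
  assert (u t * exp (- (2 * K) * t) <= u 0 * exp (- (2 * K) * 0)).
  { apply (mono_le (fun τ => u τ * exp (- (2 * K) * τ))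
          (fun τ => (2 * (th1 τ - th2 τ) * (Gf A B τ (th1 τ) - Gf A B τ (th2 τ))) * exp (- (2 * K) * τ)
                    + u τ * (exp (- (2 * K) * τ) * (- (2 * K))))); try lra.
    - intros τ _. apply (D_mult u (fun τ => exp (- (2 * K) * τ))). auto. eapply D_eq. apply (D_exp (fun τ => - (2 * K) * τ)). apply (D_scal (- (2 * K)) (fun t => t)), D_id. ring.
    - intros τ Hτ. specialize (Hbd τ Hτ). pose proof (exp_pos (- (2 * K) * τ)). nra. }
  rewrite Rmult_0_r, exp_0, Rmult_1_r in H.
  unfold u in H. 
  assert (exp (- (2 * K) * t) * exp (2 * K * t) = 1). { rewrite <- exp_plus. replace (- (2 * K) * t + 2 * K * t) with 0 by ring. apply exp_0. }
  pose proof (exp_pos (2 * K * t)). pose proof (exp_pos (- (2 * K) * t)).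
  assert ((th1 t - th2 t) ^ 2 * exp (- (2 * K) * t) * exp (2 * K * t) <= (th1 0 - th2 0) ^ 2 * exp (2 * K * t)).
  { apply Rmult_le_compat_r; lra. }
  replace ((th1 t - th2 t) ^ 2) with ((th1 t - th2 t) ^ 2 * exp (- (2 * K) * t) * exp (2 * K * t)); [exact H5|].
  rewrite Rmult_assoc, H0; ring.
Qed.

Definition pflow A B c := fun s => Gd A B s (sol A B c s).
Definition Eflow A B c := fun t => exp (RInt (pflow A B c) 0 t).

Lemma pflow_cts A B c : ctsR A -> ctsR B -> ctsR (pflow A B c).
Proof.
  intros HA HB. destruct (sol_spec A B c HA HB) as [_ Hs].
  unfold pflow, Gd. apply cts_plus; apply cts_mult.
  apply cts_opp; auto. apply cts_comp_sin. apply (cts_deriv _ _ Hs). auto.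
  apply cts_comp_cos. apply (cts_deriv _ _ Hs).
Qed.

Lemma Eflow_deriv A B c t : ctsR A -> ctsR B ->
  is_derive (Eflow A B c) t (Eflow A B c t * pflow A B c t).
Proof.
  intros HA HB. unfold Eflow. apply (D_exp (fun t => RInt (pflow A B c) 0 t)).
  apply deriv_RInt0. apply pflow_cts; auto.
Qed.

Lemma Eflow_0 A B c : Eflow A B c 0 = 1.
Proof. unfold Eflow. rewrite RInt_point. apply exp_0. Qed.

Lemma flow_est A B T K c b : ctsR A -> ctsR B -> 0 < T -> 0 <= K ->
  (forall s, Rabs s <= T -> Rabs (A s) + Rabs (B s) <= K) ->
  Rabs (sol A B b T - sol A B c T - (b - c) * Eflow A B c T) <=
    (b - c) ^ 2 * (K ^ 2 * T * exp (4 * K * T) * exp ((2 * K + 1) * T) + 1).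
Proof.
  intros HA HB HT HK0 HK.
  destruct (sol_spec A B c HA HB) as [Hc0 Hcs].
  destruct (sol_spec A B b HA HB) as [Hb0 Hbs].
  set (th := sol A B c) in *. set (thb := sol A B b) in *.
  set (p := pflow A B c). set (E := Eflow A B c).
  set (h := b - c).
  set (D := fun τ => thb τ - th τ).
  set (Rf := fun τ => D τ - h * E τ).
  set (u := fun τ => Rf τ ^ 2).
  set (Q := K ^ 2 * h ^ 4 * exp (4 * K * T)).
  set (c1 := 2 * K + 1).
  assert (HRd : forall τ, is_derive Rf τ (Gf A B τ (thb τ) - Gf A B τ (th τ) - h * (E τ * p τ))).
  { intros τ. unfold Rf, D. apply D_minus. apply D_minus; auto. apply D_scal. apply Eflow_deriv; auto. }
  assert (Hud : forall τ, is_derive u τ (2 * Rf τ * (Gf A B τ (thb τ) - Gf A B τ (th τ) - h * (E τ * p τ)))).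
  { intros τ. unfold u. eapply D_eq. apply (D_pow Rf). apply HRd. simpl. ring. }
  assert (Hineq : forall τ, 0 <= τ <= T ->
     2 * Rf τ * (Gf A B τ (thb τ) - Gf A B τ (th τ) - h * (E τ * p τ)) <= c1 * u τ + Q).
  { intros τ Hτ.
    assert (Hτa : Rabs τ <= T) by (rewrite Rabs_pos_eq; lra).
    pose proof (HK τ Hτa) as HKt.
    set (err := Gf A B τ (th τ + D τ) - Gf A B τ (th τ) - Gd A B τ (th τ) * D τ).
    assert (Herr : Rabs err <= K * D τ ^ 2).
    { unfold err. eapply Rle_trans. apply G_taylor. apply Rmult_le_compat_r; auto. apply pow2_ge_0. }
    assert (HD : D τ ^ 2 <= h ^ 2 * exp (2 * K * τ)).
    { unfold D, h. rewrite <- Hb0, <- Hc0. apply (gronwall A B T K); auto; lra. }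
    assert (Hp : Rabs (p τ) <= K). { eapply Rle_trans. apply Gd_bound. auto. }
    assert (Hid : Gf A B τ (thb τ) - Gf A B τ (th τ) - h * (E τ * p τ) = err + p τ * Rf τ).
    { unfold err, Rf, p, pflow, D. fold th. replace (th τ + (thb τ - th τ)) with (thb τ) by ring. ring. }
    rewrite Hid.
    assert (Herr2 : err ^ 2 <= Q).
    { assert (err ^ 2 <= (K * D τ ^ 2) ^ 2).
      { replace (err ^ 2) with (Rabs err ^ 2). apply pow_incr. split; auto. apply Rabs_pos.
        simpl. rewrite !Rmult_1_r, <- Rabs_mult. apply Rabs_pos_eq. nra. }
      assert ((K * D τ ^ 2) ^ 2 <= (K * (h ^ 2 * exp (2 * K * τ))) ^ 2).
      { apply pow_incr. split. pose proof (pow2_ge_0 (D τ)). nra. apply Rmult_le_compat_l; auto. }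
      assert (exp (2 * K * τ) ^ 2 <= exp (4 * K * T)).
      { simpl. rewrite Rmult_1_r, <- exp_plus. destruct (Req_dec (2 * K * τ + 2 * K * τ) (4 * K * T)) as [->|]; [lra|].
        left. apply exp_increasing. nra. }
      unfold Q. pose proof (pow2_ge_0 K). pose proof (pow2_ge_0 h).
      assert ((K * (h ^ 2 * exp (2 * K * τ))) ^ 2 = K ^ 2 * h ^ 4 * exp (2 * K * τ) ^ 2) by ring.
      assert (0 <= K ^ 2 * h ^ 4). { replace (h ^ 4) with ((h ^ 2) ^ 2) by ring. apply Rmult_le_pos; auto. apply pow2_ge_0. }
      nra. }
    unfold u, c1. set (r := Rf τ) in *. set (q := p τ) in *.
    assert (q * r ^ 2 <= K * r ^ 2). { assert (q <= K) by (apply Rabs_le_between in Hp; lra). pose proof (pow2_ge_0 r). nra. }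
    assert (2 * r * err <= r ^ 2 + err ^ 2) by (pose proof (pow2_ge_0 (r - err)); nra).
    replace (2 * r * (err + q * r)) with (2 * r * err + 2 * (q * r ^ 2)) by ring. lra. }
  assert (Hmono : u T * exp (- c1 * T) - Q * T <= u 0 * exp (- c1 * 0) - Q * 0).
  { apply (mono_le (fun τ => u τ * exp (- c1 * τ) - Q * τ)
       (fun τ => (2 * Rf τ * (Gf A B τ (thb τ) - Gf A B τ (th τ) - h * (E τ * p τ))) * exp (- c1 * τ)
                 + u τ * (exp (- c1 * τ) * (- c1)) - Q * 1)); try lra.
    - intros τ _. apply D_minus. apply (D_mult u (fun τ => exp (- c1 * τ))). auto.
      eapply D_eq. apply (D_exp (fun τ => - c1 * τ)). apply (D_scal (- c1) (fun t => t)), D_id. ring.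
      apply (D_scal Q (fun t => t)), D_id.
    - intros τ Hτ. specialize (Hineq τ Hτ).
      assert (He : exp (- c1 * τ) <= 1). { rewrite <- exp_0. destruct (Req_dec τ 0) as [->|]. right; f_equal; ring.
        left; apply exp_increasing. unfold c1; nra. }
      pose proof (exp_pos (- c1 * τ)).
      assert (0 <= Q). { unfold Q. replace (h ^ 4) with ((h ^ 2) ^ 2) by ring.
        apply Rmult_le_pos; [apply Rmult_le_pos; apply pow2_ge_0|left; apply exp_pos]. }
      nra. }
  assert (Hu0 : u 0 = 0). { unfold u, Rf, D, E. rewrite Eflow_0, Hb0, Hc0. unfold h. ring. }
  rewrite Hu0, Rmult_0_l, Rmult_0_r, Rminus_0_r in Hmono.
  assert (HuT : u T <= Q * T * exp (c1 * T)).
  { assert (exp (- c1 * T) * exp (c1 * T) = 1). { rewrite <- exp_plus. replace (- c1 * T + c1 * T) with 0 by ring. apply exp_0. }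
    pose proof (exp_pos (c1 * T)).
    assert (u T * exp (- c1 * T) * exp (c1 * T) <= Q * T * exp (c1 * T)) by (apply Rmult_le_compat_r; lra).
    rewrite Rmult_assoc, H, Rmult_1_r in H1. exact H1. }
  set (W0 := K ^ 2 * T * exp (4 * K * T) * exp ((2 * K + 1) * T)).
  assert (HW0 : 0 <= W0). { unfold W0. pose proof (exp_pos (4 * K * T)). pose proof (exp_pos ((2 * K + 1) * T)).
     pose proof (pow2_ge_0 K). apply Rmult_le_pos; [apply Rmult_le_pos; [apply Rmult_le_pos|]|]; lra. }
  assert (HuT' : Rf T ^ 2 <= h ^ 4 * W0). { unfold u, Q, c1, W0 in *. nra. }
  fold h. change (Rabs (Rf T) <= h ^ 2 * (W0 + 1)).
  assert (Hh : 0 <= h ^ 2) by apply pow2_ge_0.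
  assert (h ^ 4 * W0 <= (h ^ 2 * (W0 + 1)) ^ 2).
  { replace (h ^ 4) with ((h ^ 2) ^ 2) by ring. pose proof (pow2_ge_0 (h ^ 2)). nra. }
  rewrite <- (Rabs_pos_eq (h ^ 2 * (W0 + 1))) by (apply Rmult_le_pos; lra).
  apply Rsqr_le_abs_0. unfold Rsqr. simpl in HuT', H. lra.
Qed.

Lemma flow_deriv A B T c : ctsR A -> ctsR B -> 0 < T ->
  is_derive (fun b => sol A B b T) c (Eflow A B c T).
Proof.
  intros HA HB HT. destruct (Kbound A B T HA HB) as [K [HK0 HK]].
  set (W := K ^ 2 * T * exp (4 * K * T) * exp ((2 * K + 1) * T) + 1).
  assert (HW : 0 < W).
  { unfold W. pose proof (exp_pos (4 * K * T)). pose proof (exp_pos ((2 * K + 1) * T)).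
    pose proof (pow2_ge_0 K). assert (0 <= K ^ 2 * T * exp (4 * K * T) * exp ((2 * K + 1) * T)).
    apply Rmult_le_pos; [apply Rmult_le_pos; [apply Rmult_le_pos|]|]; lra. lra. }
  apply is_derive_Reals. intros eps Heps.
  assert (Hd : 0 < eps / W) by (apply Rdiv_lt_0_compat; auto).
  exists (mkposreal _ Hd). intros h Hh Hlt. simpl in Hlt.
  pose proof (flow_est A B T K c (c + h) HA HB HT HK0 HK) as E.
  fold W in E. replace (c + h - c) with h in E by ring.
  assert (Hpos : 0 < Rabs h) by (apply Rabs_pos_lt; auto).
  replace ((sol A B (c + h) T - sol A B c T) / h - Eflow A B c T) with
    ((sol A B (c + h) T - sol A B c T - h * Eflow A B c T) / h) by (field; auto).
  unfold Rdiv. rewrite Rabs_mult, Rabs_inv.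
  apply Rle_lt_trans with (h ^ 2 * W * / Rabs h).
  apply Rmult_le_compat_r. left; apply Rinv_0_lt_compat; auto. auto.
  replace (h ^ 2) with (Rabs h * Rabs h) by (rewrite <- Rabs_mult; simpl; rewrite Rmult_1_r; apply Rabs_pos_eq; nra).
  replace (Rabs h * Rabs h * W * / Rabs h) with (Rabs h * W) by (field; lra).
  apply Rlt_le_trans with (eps / W * W). apply Rmult_lt_compat_r; auto. right; field; lra.
Qed.

Lemma smooth_d1 f t : smooth f -> is_derive f t (Derive f t).
Proof. intros H. apply Derive_correct. apply (H 1%nat t). Qed.
Lemma smooth_d2 f t : smooth f -> is_derive (Derive f) t (Derive (Derive f) t).
Proof. intros H. apply Derive_correct. apply (H 2%nat t). Qed.
Lemma smooth_cts f : smooth f -> ctsR (Derive f).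
Proof. intros H. apply (cts_deriv _ (fun t => Derive (Derive f) t)). intros; apply smooth_d2; auto. Qed.

Lemma deriv_periodic f T : smooth f -> (forall t, f (t + T) = f t) -> Derive f T = Derive f 0.
Proof.
  intros Hs Hp. symmetry. apply is_derive_unique.
  assert (H : is_derive (fun s => f (s + T)) 0 (Derive f T)).
  { eapply D_eq. apply (is_derive_comp f (fun s => s + T) 0 (Derive f T) 1).
    rewrite Rplus_0_l. apply smooth_d1; auto.
    eapply D_eq. apply D_plus. apply D_id. apply D_const. ring.
    unfold scal; simpl; unfold mult; simpl; ring. }
  eapply is_derive_ext; [|exact H]. intros s; apply Hp.
Qed.

Definition Af (y : R -> R) (l : R) := fun t => Derive y t / l.
Definition Bf (x : R -> R) (l : R) := fun t => - Derive x t / l.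

Lemma AB_cts x y l : smooth x -> smooth y -> ctsR (Af y l) /\ ctsR (Bf x l).
Proof.
  intros Hx Hy. unfold Af, Bf. split.
  - apply (cts_mult (Derive y) (fun _ => / l)). apply smooth_cts; auto. intros t; apply continuous_const.
  - apply (cts_mult (fun t => - Derive x t) (fun _ => / l)). apply cts_opp, smooth_cts; auto. intros t; apply continuous_const.
Qed.

Lemma rear_x_deriv x l th t dth : smooth x -> is_derive th t dth ->
  is_derive (rear_x x l th) t (Derive x t + l * sin (th t) * dth).
Proof.
  intros Hx Hth. unfold rear_x. eapply D_eq. apply D_minus. apply smooth_d1; auto.
  apply D_scal. apply D_cos. exact Hth. ring.
Qed.
Lemma rear_y_deriv y l th t dth : smooth y -> is_derive th t dth ->
  is_derive (rear_y y l th) t (Derive y t - l * cos (th t) * dth).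
Proof.
  intros Hy Hth. unfold rear_y. eapply D_eq. apply D_minus. apply smooth_d1; auto.
  apply D_scal. apply D_sin. exact Hth. ring.
Qed.

Lemma bicycle_sol x y l th : smooth x -> smooth y -> 0 < l ->
  bicycle_motion x y l th -> is_sol (Af y l) (Bf x l) th.
Proof.
  intros Hx Hy Hl [Hd He] t. 
  pose proof (Derive_correct th t (Hd t)) as Ht.
  specialize (He t). rewrite (is_derive_unique _ _ _ (rear_x_deriv x l th t _ Hx Ht)) in He.
  rewrite (is_derive_unique _ _ _ (rear_y_deriv y l th t _ Hy Ht)) in He.
  eapply D_eq. exact Ht. unfold Gf, Af, Bf.
  pose proof (sin2_cos2 (th t)). unfold Rsqr in H.
  assert (E : l * Derive th t = Derive y t * cos (th t) - Derive x t * sin (th t)).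
  { replace (l * Derive th t) with (l * Derive th t * (sin (th t) * sin (th t) + cos (th t) * cos (th t))) by (rewrite H; ring).
    rewrite <- (Rminus_0_r (_ * _)). rewrite <- He. ring. }
  apply (Rmult_eq_reg_l l); [|lra]. rewrite E. field. lra.
Qed.

Lemma sol_bicycle x y l th : smooth x -> smooth y -> 0 < l ->
  is_sol (Af y l) (Bf x l) th -> bicycle_motion x y l th.
Proof.
  intros Hx Hy Hl Hs. split.
  - intros t. eexists. apply Hs.
  - intros t. rewrite (is_derive_unique _ _ _ (rear_x_deriv x l th t _ Hx (Hs t))).
    rewrite (is_derive_unique _ _ _ (rear_y_deriv y l th t _ Hy (Hs t))).
    unfold Gf, Af, Bf. pose proof (sin2_cos2 (th t)). unfold Rsqr in H.
    set (sn := sin (th t)) in *. set (cs := cos (th t)) in *.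
    match goal with |- ?e = 0 => replace e with ((Derive y t * cs - Derive x t * sn) * (sn * sn + cs * cs - 1)) by (field; lra) end.
    rewrite H. ring.
Qed.

Lemma monodromy_eq x y l T : smooth x -> smooth y -> 0 < l ->
  monodromy x y l T = fun c => sol (Af y l) (Bf x l) c T.
Proof.
  intros Hx Hy Hl. destruct (AB_cts x y l Hx Hy) as [HA HB].
  apply functional_extensionality. intros c. unfold monodromy.
  destruct (sol_spec (Af y l) (Bf x l) c HA HB) as [H0 Hs].
  assert (Hex : exists th1, monodromy_rel x y l T c th1).
  { exists (sol (Af y l) (Bf x l) c T). exists (sol (Af y l) (Bf x l) c). split; auto.
    apply sol_bicycle; auto. }
  destruct (epsilon_spec (inhabits 0) (fun th1 => monodromy_rel x y l T c th1) Hex) as [th [Hb [Hth0 HthT]]].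
  rewrite <- HthT. apply (sol_unique (Af y l) (Bf x l) th _ 0 T HA HB); auto.
  apply bicycle_sol; auto. congruence.
Qed.

Lemma loc_lip f df m : is_derive f m df ->
  exists d, 0 < d /\ forall h, Rabs h < d -> Rabs (f (m + h) - f m) <= Rabs h * (Rabs df + 1).
Proof.
  intros H. apply is_derive_Reals in H. destruct (H 1 Rlt_0_1) as [d Hd].
  exists d. split. apply cond_pos. intros h Hh.
  destruct (Req_dec h 0) as [->|Hne].
  - rewrite Rplus_0_r, Rminus_diag, Rabs_R0. lra.
  - specialize (Hd h Hne Hh).
    replace (f (m + h) - f m) with (h * ((f (m + h) - f m) / h - df) + h * df) by (field; auto).
    eapply Rle_trans. apply Rabs_triang. rewrite !Rabs_mult.
    pose proof (Rabs_pos h). nra.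
Qed.

Lemma loc_pos f df m : is_derive f m df -> 0 < f m ->
  exists d, 0 < d /\ forall u, Rabs (u - m) < d -> 0 < f u.
Proof.
  intros H Hm. destruct (loc_lip f df m H) as [d [Hd HL]].
  assert (Hq : 0 < f m / (Rabs df + 1)) by (apply Rdiv_lt_0_compat; pose proof (Rabs_pos df); lra).
  exists (Rmin d (f m / (Rabs df + 1))). split. apply Rmin_glb_lt; auto.
  intros u Hu. specialize (HL (u - m)). replace (m + (u - m)) with u in HL by ring.
  assert (Rabs (u - m) < d) by (eapply Rlt_le_trans; [exact Hu|apply Rmin_l]).
  specialize (HL H0).
  assert (Rabs (u - m) * (Rabs df + 1) < f m).
  { assert (Rabs (u - m) < f m / (Rabs df + 1)) by (eapply Rlt_le_trans; [exact Hu|apply Rmin_r]).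
    pose proof (Rabs_pos df). apply (Rmult_lt_compat_r (Rabs df + 1)) in H1; [|lra].
    unfold Rdiv in H1. rewrite Rmult_assoc, Rinv_l, Rmult_1_r in H1; lra. }
  apply Rabs_le_between in HL. lra.
Qed.

Lemma loc_neg f df m : is_derive f m df -> f m < 0 ->
  exists d, 0 < d /\ forall u, Rabs (u - m) < d -> f u < 0.
Proof.
  intros H Hm. destruct (loc_pos (fun t => - f t) (- df) m) as [d [Hd Hu]].
  apply D_opp; auto. lra. exists d. split; auto. intros u Hu'. specialize (Hu u Hu'). lra.
Qed.

Lemma loc_zero f df m : is_derive f m df -> f m = 0 -> 0 < df ->
  exists d, 0 < d /\ forall h, 0 < h < d -> 0 < f (m + h) /\ f (m - h) < 0.
Proof.
  intros H Hm Hdf. apply is_derive_Reals in H.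
  destruct (H (df / 2) ltac:(lra)) as [d Hd]. exists d. split. apply cond_pos.
  intros h Hh. split.
  - specialize (Hd h ltac:(lra) ltac:(rewrite Rabs_pos_eq; lra)). rewrite Hm, Rminus_0_r in Hd.
    apply Rabs_lt_between in Hd.
    assert (0 < f (m + h) / h) by lra.
    replace (f (m + h)) with (f (m + h) / h * h) by (field; lra). nra.
  - specialize (Hd (- h) ltac:(lra) ltac:(rewrite Rabs_Ropp, Rabs_pos_eq; lra)). rewrite Hm, Rminus_0_r in Hd.
    apply Rabs_lt_between in Hd. replace (m + - h) with (m - h) in Hd by ring.
    assert (0 < f (m - h) / - h) by lra.
    replace (f (m - h)) with (f (m - h) / - h * - h) by (field; lra). nra.
Qed.

Lemma stays_pos f df a b : (forall t, is_derive f t (df t)) ->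
  (forall t, f t = 0 -> 0 < df t) -> a < b -> 0 <= f a -> 0 < f b.
Proof.
  intros Hd Hz Hab Ha. destruct (Rlt_or_le 0 (f b)) as [|Hb]; auto. exfalso.
  set (E := fun s => a <= s <= b /\ forall u, a < u <= s -> 0 < f u).
  assert (HE : bound E). { exists b. intros s [Hs _]. lra. }
  assert (HEa : E a). { split. lra. intros; lra. }
  destruct (completeness E HE (ex_intro _ a HEa)) as [m [Hub Hlub]].
  assert (Hm1 : a <= m) by (apply Hub; auto).
  assert (Hm2 : m <= b). { apply Hlub. intros s [Hs _]. lra. }
  assert (Hin : forall u, a < u < m -> 0 < f u).
  { intros u Hu. destruct (Rlt_or_le u m) as [Hlt|]; [|lra].
    destruct (classic (exists s, E s /\ u < s)) as [[s [[_ Hs] Hus]]|Hn].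
    - apply Hs. lra.
    - exfalso. assert (m <= u). { apply Hlub. intros s Hs. destruct (Rle_or_lt s u); auto. exfalso; apply Hn; eauto. }
      lra. }
  assert (Hma : a < m).
  { destruct (Rle_lt_or_eq_dec 0 (f a) Ha) as [Hpos|Hzero].
    - destruct (loc_pos f (df a) a (Hd a) Hpos) as [d [Hd0 Hd1]].
      assert (E (Rmin (a + d / 2) b)).
      { split. split. apply Rmin_glb; lra. apply Rmin_r.
        intros u Hu. apply Hd1. assert (u <= a + d / 2) by (eapply Rle_trans; [apply Hu|apply Rmin_l]).
        rewrite Rabs_pos_eq; lra. }
      apply Hub in H. assert (a < Rmin (a + d / 2) b) by (apply Rmin_glb_lt; lra). lra.
    - destruct (loc_zero f (df a) a (Hd a) (eq_sym Hzero) (Hz a (eq_sym Hzero))) as [d [Hd0 Hd1]].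
      assert (E (Rmin (a + d / 2) b)).
      { split. split. apply Rmin_glb; lra. apply Rmin_r.
        intros u Hu. assert (u <= a + d / 2) by (eapply Rle_trans; [apply Hu|apply Rmin_l]).
        replace u with (a + (u - a)) by ring. apply Hd1. lra. }
      apply Hub in H. assert (a < Rmin (a + d / 2) b) by (apply Rmin_glb_lt; lra). lra. }
  destruct (Rlt_or_le (f m) 0) as [Hneg|Hnn].
  - destruct (loc_neg f (df m) m (Hd m) Hneg) as [d [Hd0 Hd1]].
    set (u := m - Rmin (d / 2) ((m - a) / 2)).
    assert (Hu1 : 0 < Rmin (d / 2) ((m - a) / 2)) by (apply Rmin_glb_lt; lra).
    assert (Hu2 : Rmin (d / 2) ((m - a) / 2) <= d / 2) by apply Rmin_l.
    assert (Hu3 : Rmin (d / 2) ((m - a) / 2) <= (m - a) / 2) by apply Rmin_r.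
    assert (0 < f u) by (apply Hin; unfold u; lra).
    assert (f u < 0) by (apply Hd1; unfold u; rewrite Rabs_left1; lra). lra.
  - destruct (Rle_lt_or_eq_dec 0 (f m) Hnn) as [Hpos|Hzero].
    + destruct (Req_dec m b) as [->|Hmb]; [lra|].
      destruct (loc_pos f (df m) m (Hd m) Hpos) as [d [Hd0 Hd1]].
      assert (E (Rmin (m + d / 2) b)).
      { split. split. apply Rmin_glb; lra. apply Rmin_r.
        intros u Hu. assert (u <= m + d / 2) by (eapply Rle_trans; [apply Hu|apply Rmin_l]).
        destruct (Rlt_or_le u m). apply Hin; lra. apply Hd1. rewrite Rabs_pos_eq; lra. }
      apply Hub in H. assert (m < Rmin (m + d / 2) b) by (apply Rmin_glb_lt; lra). lra.
    + destruct (loc_zero f (df m) m (Hd m) (eq_sym Hzero) (Hz m (eq_sym Hzero))) as [d [Hd0 Hd1]].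
      set (h := Rmin (d / 2) ((m - a) / 2)).
      assert (Hu1 : 0 < h) by (apply Rmin_glb_lt; lra).
      assert (Hu2 : h <= d / 2) by apply Rmin_l.
      assert (Hu3 : h <= (m - a) / 2) by apply Rmin_r.
      destruct (Hd1 h ltac:(lra)) as [_ Hneg].
      assert (0 < f (m - h)) by (apply Hin; lra). lra.
Qed.

Lemma cosZ x k : cos (x + 2 * PI * IZR k) = cos x.
Proof.
  destruct k as [|p|p].
  - simpl. f_equal; ring.
  - replace (IZR (Z.pos p)) with (INR (Pos.to_nat p)) by (rewrite INR_IZR_INZ, positive_nat_Z; reflexivity).
    rewrite <- (cos_period x (Pos.to_nat p)). f_equal; ring.
  - rewrite <- (cos_period (x + 2 * PI * IZR (Z.neg p)) (Pos.to_nat p)). f_equal.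
    replace (IZR (Z.neg p)) with (- INR (Pos.to_nat p)) by (rewrite INR_IZR_INZ, positive_nat_Z, <- Pos2Z.opp_pos, opp_IZR; reflexivity). ring.
Qed.
Lemma sinZ x k : sin (x + 2 * PI * IZR k) = sin x.
Proof.
  destruct k as [|p|p].
  - simpl. f_equal; ring.
  - replace (IZR (Z.pos p)) with (INR (Pos.to_nat p)) by (rewrite INR_IZR_INZ, positive_nat_Z; reflexivity).
    rewrite <- (sin_period x (Pos.to_nat p)). f_equal; ring.
  - rewrite <- (sin_period (x + 2 * PI * IZR (Z.neg p)) (Pos.to_nat p)). f_equal.
    replace (IZR (Z.neg p)) with (- INR (Pos.to_nat p)) by (rewrite INR_IZR_INZ, positive_nat_Z, <- Pos2Z.opp_pos, opp_IZR; reflexivity). ring.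
Qed.

Lemma red_int z a : exists k, a <= z - 2 * PI * IZR k < a + 2 * PI.
Proof.
  exists (Int_part ((z - a) / (2 * PI))). pose proof PI_RGT_0.
  destruct (base_Int_part ((z - a) / (2 * PI))) as [H1 H2].
  set (n := IZR (Int_part ((z - a) / (2 * PI)))) in *.
  assert (E : (z - a) / (2 * PI) * (2 * PI) = z - a) by (field; lra).
  split; nra.
Qed.

Lemma arc_pos z : 0 < cos z -> exists k s, z = s + 2 * PI * IZR k /\ - (PI / 2) < s < PI / 2.
Proof.
  intros Hc. destruct (red_int z (- (PI / 2))) as [k Hk]. exists k, (z - 2 * PI * IZR k).
  split. ring.
  assert (Hc' : cos (z - 2 * PI * IZR k) = cos z).
  { rewrite <- (cosZ (z - 2 * PI * IZR k) k). f_equal; ring. }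
  split.
  - destruct (Req_dec (z - 2 * PI * IZR k) (- (PI / 2))) as [He|]; [|lra].
    rewrite He, cos_neg, cos_PI2 in Hc'. lra.
  - destruct (Rlt_or_le (z - 2 * PI * IZR k) (PI / 2)); auto.
    assert (cos (z - 2 * PI * IZR k) <= 0) by (apply cos_le_0; lra). lra.
Qed.

Lemma arc_neg z : cos z < 0 -> exists k s, z = s + 2 * PI * IZR k /\ PI / 2 < s < 3 * (PI / 2).
Proof.
  intros Hc. destruct (red_int z (- (PI / 2))) as [k Hk]. exists k, (z - 2 * PI * IZR k).
  split. ring.
  assert (Hc' : cos (z - 2 * PI * IZR k) = cos z).
  { rewrite <- (cosZ (z - 2 * PI * IZR k) k). f_equal; ring. }
  destruct (Rle_or_lt (z - 2 * PI * IZR k) (PI / 2)).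
  - assert (0 <= cos (z - 2 * PI * IZR k)) by (apply cos_ge_0; lra). lra.
  - lra.
Qed.

Lemma int_gap_neg (k : Z) : - (1 / 2) < IZR k < 0 -> False.
Proof.
  intros [H1 H2]. apply lt_IZR in H2. assert (IZR (-1) < IZR k) by (simpl; lra).
  apply lt_IZR in H. lia.
Qed.
Lemma int_gap_pos (k : Z) : 0 < IZR k < 1 / 2 -> False.
Proof.
  intros [H1 H2]. apply lt_IZR in H1. assert (IZR k < IZR 1) by (simpl; lra).
  apply lt_IZR in H. lia.
Qed.

Lemma same_mod u v (k : Z) : 0 <= u < 2 * PI -> 0 <= v < 2 * PI -> u = v + 2 * PI * IZR k -> u = v.
Proof.
  intros Hu Hv E. pose proof PI_RGT_0.
  assert (- 1 < IZR k < 1).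
  { split; apply (Rmult_lt_reg_l (2 * PI)); nra. }
  destruct H0 as [H1 H2]. apply lt_IZR in H1. apply lt_IZR in H2. assert (Hk : k = 0%Z) by lia. rewrite Hk in E.
  simpl in E. lra.
Qed.

Lemma polar X0 Y0 : 0 < X0 ^ 2 + Y0 ^ 2 ->
  exists al, X0 = sqrt (X0 ^ 2 + Y0 ^ 2) * cos al /\ Y0 = sqrt (X0 ^ 2 + Y0 ^ 2) * sin al.
Proof.
  intros Hv. set (V := sqrt (X0 ^ 2 + Y0 ^ 2)).
  assert (HV : 0 < V) by (apply sqrt_lt_R0; auto).
  assert (HV2 : V * V = X0 ^ 2 + Y0 ^ 2) by (apply sqrt_sqrt; lra).
  set (z := X0 / V).
  assert (Hz : -1 <= z <= 1).
  { unfold z. assert (X0 ^ 2 <= V * V) by (pose proof (pow2_ge_0 Y0); lra).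
    split.
    - apply (Rmult_le_reg_r V); auto. unfold Rdiv. rewrite Rmult_assoc, Rinv_l, Rmult_1_r by lra. nra.
    - apply (Rmult_le_reg_r V); auto. unfold Rdiv. rewrite Rmult_assoc, Rinv_l, Rmult_1_r by lra. nra. }
  assert (Hs : sqrt (1 - z²) = Rabs Y0 / V).
  { rewrite <- (sqrt_Rsqr (Rabs Y0 / V)). f_equal. unfold Rsqr, z.
    replace (Rabs Y0 / V * (Rabs Y0 / V)) with ((Rabs Y0 * Rabs Y0) / (V * V)) by (field; lra).
    rewrite <- Rabs_mult, Rabs_pos_eq by nra.
    replace (X0 / V * (X0 / V)) with (X0 * X0 / (V * V)) by (field; lra). rewrite HV2. field. lra.
    apply Rdiv_le_0_compat; auto. apply Rabs_pos. }
  destruct (Rle_or_lt 0 Y0) as [HY|HY].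
  - exists (acos z). rewrite cos_acos, sin_acos by auto. rewrite Hs. rewrite Rabs_pos_eq by auto.
    unfold z. split; field; lra.
  - exists (- acos z). rewrite cos_neg, sin_neg, cos_acos, sin_acos by auto. rewrite Hs. rewrite Rabs_left by auto.
    unfold z. split; field; lra.
Qed.

Definition Hyp (x y : R -> R) (T l kmax : R) : Prop :=
  smooth x /\ smooth y /\ 0 < T /\ (forall t, x (t + T) = x t /\ y (t + T) = y t) /\
  (forall t, Derive x t <> 0 \/ Derive y t <> 0) /\ 0 < l /\ 0 < kmax /\ l * kmax < 1 /\
  (forall t, curvature x y t <= kmax).

Definition Th x y l c := sol (Af y l) (Bf x l) c.
Definition Mo x y l T := fun c => Th x y l c T.
Definition wf x y l c := fun t => Derive x t * cos (Th x y l c t) + Derive y t * sin (Th x y l c t).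


Lemma Hyp_cts x y T l k : Hyp x y T l k -> ctsR (Af y l) /\ ctsR (Bf x l).
Proof. intros (Hx & Hy & _). apply AB_cts; auto. Qed.

Lemma Th_spec x y T l k c : Hyp x y T l k -> Th x y l c 0 = c /\ is_sol (Af y l) (Bf x l) (Th x y l c).
Proof. intros H. destruct (Hyp_cts _ _ _ _ _ H). apply sol_spec; auto. Qed.

Definition dwf x y l c := fun t =>
  Derive (Derive x) t * cos (Th x y l c t) + Derive x t * (- sin (Th x y l c t) * Gf (Af y l) (Bf x l) t (Th x y l c t)) +
  (Derive (Derive y) t * sin (Th x y l c t) + Derive y t * (cos (Th x y l c t) * Gf (Af y l) (Bf x l) t (Th x y l c t))).

Lemma wf_deriv x y T l k c t : Hyp x y T l k -> is_derive (wf x y l c) t (dwf x y l c t).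
Proof.
  intros H. pose proof H as (Hx & Hy & _). destruct (Th_spec x y T l k c H) as [_ Hs].
  unfold wf, dwf. apply D_plus.
  - eapply D_eq. apply (D_mult (Derive x) (fun t => cos (Th x y l c t))). apply smooth_d2; auto.
    apply D_cos. apply Hs. ring.
  - eapply D_eq. apply (D_mult (Derive y) (fun t => sin (Th x y l c t))). apply smooth_d2; auto.
    apply D_sin. apply Hs. ring.
Qed.

Lemma curv_bound x y T l k t : Hyp x y T l k ->
  Rabs (Derive x t * Derive (Derive y) t - Derive y t * Derive (Derive x) t) <=
  k * ((Derive x t ^ 2 + Derive y t ^ 2) * sqrt (Derive x t ^ 2 + Derive y t ^ 2)).
Proof.
  intros (Hx & Hy & HT & Hp & Hreg & Hl & Hk & Hlk & Hc).
  specialize (Hc t). unfold curvature in Hc. cbv zeta in Hc.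
  change (Derive_n y 2 t) with (Derive (Derive y) t) in Hc.
  change (Derive_n x 2 t) with (Derive (Derive x) t) in Hc.
  assert (Hv : 0 < Derive x t ^ 2 + Derive y t ^ 2).
  { destruct (Hreg t) as [H|H]; [pose proof (pow2_gt_0 _ H); pose proof (pow2_ge_0 (Derive y t))|
      pose proof (pow2_gt_0 _ H); pose proof (pow2_ge_0 (Derive x t))]; lra. }
  pose proof (sqrt_lt_R0 _ Hv).
  assert (Hd : 0 < (Derive x t ^ 2 + Derive y t ^ 2) * sqrt (Derive x t ^ 2 + Derive y t ^ 2)) by (apply Rmult_lt_0_compat; auto).
  unfold Rdiv in Hc. apply (Rmult_le_compat_r ((Derive x t ^ 2 + Derive y t ^ 2) * sqrt (Derive x t ^ 2 + Derive y t ^ 2))) in Hc; [|lra].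
  rewrite Rmult_assoc, Rinv_l, Rmult_1_r in Hc; lra.
Qed.

Lemma alg_pos (vX vY vX2 vY2 cs sn k l : R) : sn * sn + cs * cs = 1 -> 0 < vX ^ 2 + vY ^ 2 -> 0 < l -> 0 < k ->
  l * k < 1 -> vX * cs + vY * sn = 0 ->
  Rabs (vX * vY2 - vY * vX2) <= k * ((vX ^ 2 + vY ^ 2) * sqrt (vX ^ 2 + vY ^ 2)) ->
  0 < vX2 * cs + vX * (- sn * (vY / l * cs + - vX / l * sn)) + (vY2 * sn + vY * (cs * (vY / l * cs + - vX / l * sn))).
Proof.
  intros Hcs Hv Hl Hk Hlk Hw Hcb.
  set (v2 := vX ^ 2 + vY ^ 2) in *.
  set (S := sqrt v2) in *. assert (HS : 0 < S) by (apply sqrt_lt_R0; auto).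
  assert (HS2 : S * S = v2) by (apply sqrt_sqrt; lra).
  set (q := vY * cs - vX * sn). set (z := vX2 * cs + vY2 * sn). set (m := vX2 * vY - vX * vY2).
  assert (Hq2 : q * q = v2).
  { unfold q, v2. replace ((vY * cs - vX * sn) * (vY * cs - vX * sn)) with
      ((vX ^ 2 + vY ^ 2) * (sn * sn + cs * cs) - (vX * cs + vY * sn) * (vX * cs + vY * sn)) by ring.
    rewrite Hw, Hcs. ring. }
  assert (Hz : v2 * z = q * m).
  { unfold z, q, m, v2. replace ((vX ^ 2 + vY ^ 2) * (vX2 * cs + vY2 * sn)) with
      ((vX * cs + vY * sn) * (vX * vX2 + vY * vY2) + (vY * cs - vX * sn) * (vX2 * vY - vY2 * vX)) by ring.
    rewrite Hw. ring. }
  assert (Hq : Rabs q = S).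
  { assert (Rabs q * Rabs q = S * S) by (rewrite <- Rabs_mult, Hq2, HS2; apply Rabs_pos_eq; lra).
    pose proof (Rabs_pos q). nra. }
  assert (Hm : Rabs m <= k * (v2 * S)).
  { unfold m. replace (vX2 * vY - vX * vY2) with (- (vX * vY2 - vY * vX2)) by ring. rewrite Rabs_Ropp. exact Hcb. }
  assert (Hzb : v2 * Rabs z <= k * v2 * v2).
  { replace (v2 * Rabs z) with (Rabs (v2 * z)) by (rewrite Rabs_mult, (Rabs_pos_eq v2); lra).
    rewrite Hz, Rabs_mult, Hq. replace (k * v2 * v2) with (S * (k * (v2 * S))) by (rewrite <- HS2; ring).
    apply Rmult_le_compat_l; lra. }
  assert (Hz2 : - (k * v2) <= z).
  { assert (Rabs z <= k * v2) by (apply (Rmult_le_reg_l v2); auto; lra).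
    apply Rabs_le_between in H. lra. }
  replace (vX2 * cs + vX * (- sn * (vY / l * cs + - vX / l * sn)) + (vY2 * sn + vY * (cs * (vY / l * cs + - vX / l * sn))))
    with (z + q * q / l) by (unfold z, q; field; lra).
  rewrite Hq2. assert (v2 / l > k * v2).
  { apply (Rmult_lt_reg_l l); auto. replace (l * (v2 / l)) with v2 by (field; lra). nra. }
  lra.
Qed.

Lemma w_zero_pos x y T l k c t : Hyp x y T l k -> wf x y l c t = 0 -> 0 < dwf x y l c t.
Proof.
  intros H Hw. pose proof (curv_bound x y T l k t H) as Hcb.
  destruct H as (Hx & Hy & HT & Hp & Hreg & Hl & Hk & Hlk & Hc).
  unfold wf, dwf in *. unfold Gf, Af, Bf. cbv beta.
  apply (alg_pos _ _ _ _ _ _ k l); auto.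
  - pose proof (sin2_cos2 (Th x y l c t)). unfold Rsqr in H; auto.
  - destruct (Hreg t) as [H|H]; [pose proof (pow2_gt_0 _ H); pose proof (pow2_ge_0 (Derive y t))|
      pose proof (pow2_gt_0 _ H); pose proof (pow2_ge_0 (Derive x t))]; lra.
Qed.

Lemma pflow_w x y l c s : 0 < l -> pflow (Af y l) (Bf x l) c s = - wf x y l c s / l.
Proof. intros Hl. unfold pflow, Gd, wf, Th. set (th := sol (Af y l) (Bf x l) c s). unfold Af, Bf. field. lra. Qed.

Lemma M_deriv x y T l k c : Hyp x y T l k ->
  is_derive (Mo x y l T) c (Eflow (Af y l) (Bf x l) c T).
Proof.
  intros H. destruct (Hyp_cts _ _ _ _ _ H) as [HA HB]. pose proof H as (_ & _ & HT & _).
  apply (flow_deriv (Af y l) (Bf x l) T c HA HB HT).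
Qed.

Lemma Pt_deriv x y T l k c t : Hyp x y T l k ->
  is_derive (fun t => RInt (pflow (Af y l) (Bf x l) c) 0 t) t (pflow (Af y l) (Bf x l) c t).
Proof.
  intros H. destruct (Hyp_cts _ _ _ _ _ H) as [HA HB]. apply deriv_RInt0. apply pflow_cts; auto.
Qed.

Lemma Eflow_lt1 x y T l k c : Hyp x y T l k -> 0 <= wf x y l c 0 -> Eflow (Af y l) (Bf x l) c T < 1.
Proof.
  intros H Hw0. pose proof H as (_ & _ & HT & _ & _ & Hl & _).
  unfold Eflow. rewrite <- exp_0. apply exp_increasing.
  assert (RInt (pflow (Af y l) (Bf x l) c) 0 T < RInt (pflow (Af y l) (Bf x l) c) 0 0).
  { apply (mono_lt (fun t => RInt (pflow (Af y l) (Bf x l) c) 0 t) (pflow (Af y l) (Bf x l) c)); auto.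
    - intros s _. apply (Pt_deriv x y T l k); auto.
    - intros s Hs. rewrite pflow_w by auto.
      assert (0 < wf x y l c s).
      { apply (stays_pos (wf x y l c) (dwf x y l c) 0 s); auto; try lra.
        intros; apply (wf_deriv x y T l k); auto.
        intros; apply (w_zero_pos x y T l k); auto. }
      assert (0 < wf x y l c s / l) by (apply Rdiv_lt_0_compat; auto). lra. }
  rewrite RInt_point in H0. exact H0.
Qed.

Lemma Eflow_gt1 x y T l k c : Hyp x y T l k -> wf x y l c T <= 0 -> 1 < Eflow (Af y l) (Bf x l) c T.
Proof.
  intros H HwT. pose proof H as (_ & _ & HT & _ & _ & Hl & _).
  unfold Eflow. rewrite <- exp_0. apply exp_increasing.
  assert (- RInt (pflow (Af y l) (Bf x l) c) 0 T < - RInt (pflow (Af y l) (Bf x l) c) 0 0).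
  { apply (mono_lt (fun t => - RInt (pflow (Af y l) (Bf x l) c) 0 t) (fun t => - pflow (Af y l) (Bf x l) c t)); auto.
    - intros s _. apply D_opp. apply (Pt_deriv x y T l k); auto.
    - intros s Hs. rewrite pflow_w by auto.
      assert (wf x y l c s < 0).
      { destruct (Rlt_or_le (wf x y l c s) 0) as [|Hge]; auto. exfalso.
        assert (0 < wf x y l c T).
        { apply (stays_pos (wf x y l c) (dwf x y l c) s T); auto; try lra.
          intros; apply (wf_deriv x y T l k); auto.
          intros; apply (w_zero_pos x y T l k); auto. }
        lra. }
      assert (wf x y l c s / l < 0). { unfold Rdiv. apply Rmult_neg_pos; auto. apply Rinv_0_lt_compat; auto. }
      lra. }
  rewrite RInt_point in H0. unfold zero in H0; simpl in H0. lra.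
Qed.

Lemma M_shift x y T l k c (z : Z) : Hyp x y T l k ->
  Mo x y l T (c + 2 * PI * IZR z) = Mo x y l T c + 2 * PI * IZR z.
Proof.
  intros H. destruct (Hyp_cts _ _ _ _ _ H) as [HA HB].
  destruct (Th_spec x y T l k c H) as [H0 Hs].
  destruct (Th_spec x y T l k (c + 2 * PI * IZR z) H) as [H0' Hs'].
  unfold Mo. apply (sol_unique (Af y l) (Bf x l) _ (fun t => Th x y l c t + 2 * PI * IZR z) 0 T HA HB); auto.
  - intros t. eapply D_eq. apply D_plus. apply Hs. apply D_const.
    unfold Gf. rewrite cosZ, sinZ. ring.
  - rewrite H0, H0'. reflexivity.
Qed.

Lemma Th_cont x y T l k c : Hyp x y T l k -> forall t, continuity_pt (Th x y l c) t.
Proof.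
  intros H t. destruct (Th_spec x y T l k c H) as [_ Hs].
  apply derivable_continuous_pt. exists (Gf (Af y l) (Bf x l) t (Th x y l c t)). apply is_derive_Reals. apply Hs.
Qed.

Lemma M_cont x y T l k : Hyp x y T l k -> continuity (Mo x y l T).
Proof.
  intros H c. apply derivable_continuous_pt. exists (Eflow (Af y l) (Bf x l) c T).
  apply is_derive_Reals. apply (M_deriv x y T l k); auto.
Qed.

Lemma M_mono x y T l k c1 c2 : Hyp x y T l k -> c1 < c2 -> Mo x y l T c1 < Mo x y l T c2.
Proof.
  intros H Hc. pose proof H as (_ & _ & HT & _).
  destruct (Hyp_cts _ _ _ _ _ H) as [HA HB].
  destruct (Th_spec x y T l k c1 H) as [H1 Hs1]. destruct (Th_spec x y T l k c2 H) as [H2 Hs2].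
  destruct (Rlt_or_le (Mo x y l T c1) (Mo x y l T c2)) as [|Hle]; auto. exfalso.
  set (D := fun t => Th x y l c2 t - Th x y l c1 t).
  assert (HD : continuity D). { intros t. apply continuity_pt_minus; apply (Th_cont x y T l k); auto. }
  destruct (IVT_gen D 0 T 0 HD) as [s [Hs HDs]].
  { unfold D, Mo in *. rewrite H1, H2. rewrite Rmin_right, Rmax_left; lra. }
  unfold D in HDs.
  assert (Th x y l c2 0 = Th x y l c1 0).
  { apply (sol_unique (Af y l) (Bf x l) _ _ s 0 HA HB); auto. lra. }
  rewrite H1, H2 in H0. lra.
Qed.

Lemma wf_0 x y T l k c : Hyp x y T l k -> wf x y l c 0 = Derive x 0 * cos c + Derive y 0 * sin c.
Proof. intros H. destruct (Th_spec x y T l k c H) as [H0 _]. unfold wf. rewrite H0. reflexivity. Qed.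

Lemma wf_T x y T l k c : Hyp x y T l k ->
  wf x y l c T = Derive x 0 * cos (Mo x y l T c) + Derive y 0 * sin (Mo x y l T c).
Proof.
  intros H. pose proof H as (Hx & Hy & HT & Hp & _).
  unfold wf, Mo. rewrite (deriv_periodic x T), (deriv_periodic y T); auto; intros t; apply Hp.
Qed.

Definition W0 x y th := Derive x 0 * cos th + Derive y 0 * sin th.

Lemma W0_per x y th z : W0 x y (th + 2 * PI * IZR z) = W0 x y th.
Proof. unfold W0. rewrite cosZ, sinZ. reflexivity. Qed.

Lemma FA x y T l k c : Hyp x y T l k -> 0 <= W0 x y c -> 0 < W0 x y (Mo x y l T c).
Proof.
  intros H Hc. pose proof H as (_ & _ & HT & _).
  unfold W0. rewrite <- (wf_T x y T l k c H).
  apply (stays_pos (wf x y l c) (dwf x y l c) 0 T); auto.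
  intros; apply (wf_deriv x y T l k); auto.
  intros; apply (w_zero_pos x y T l k); auto.
  rewrite (wf_0 x y T l k c H). exact Hc.
Qed.

Lemma DM x y T l k c : Hyp x y T l k -> Derive (Mo x y l T) c = Eflow (Af y l) (Bf x l) c T.
Proof. intros H. apply is_derive_unique. apply (M_deriv x y T l k); auto. Qed.

Lemma h_dec x y T l k u v : Hyp x y T l k -> u < v ->
  (forall xi, u <= xi <= v -> 0 <= W0 x y xi) ->
  Mo x y l T v - v < Mo x y l T u - u.
Proof.
  intros H Huv Hw.
  apply (mono_lt (fun xi => Mo x y l T xi - xi) (fun xi => Eflow (Af y l) (Bf x l) xi T - 1)); auto.
  - intros s _. apply D_minus. apply (M_deriv x y T l k); auto. apply D_id.
  - intros s Hs. assert (Eflow (Af y l) (Bf x l) s T < 1); [|lra].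
    apply (Eflow_lt1 x y T l k); auto. rewrite (wf_0 x y T l k s H). apply Hw; lra.
Qed.

Lemma h_inc x y T l k u v : Hyp x y T l k -> u < v ->
  (forall xi, u <= xi <= v -> W0 x y (Mo x y l T xi) <= 0) ->
  Mo x y l T u - u < Mo x y l T v - v.
Proof.
  intros H Huv Hw.
  assert (- (Mo x y l T v - v) < - (Mo x y l T u - u)); [|lra].
  apply (mono_lt (fun xi => - (Mo x y l T xi - xi)) (fun xi => - (Eflow (Af y l) (Bf x l) xi T - 1))); auto.
  - intros s _. apply D_opp. apply D_minus. apply (M_deriv x y T l k); auto. apply D_id.
  - intros s Hs. assert (1 < Eflow (Af y l) (Bf x l) s T); [|lra].
    apply (Eflow_gt1 x y T l k); auto. rewrite (wf_T x y T l k s H). apply Hw; lra.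
Qed.

Lemma M_le x y T l k u v : Hyp x y T l k -> u <= v -> Mo x y l T u <= Mo x y l T v.
Proof.
  intros H Huv. destruct (Rle_lt_or_eq_dec _ _ Huv) as [Hlt| ->]. left; apply (M_mono x y T l k); auto. right; auto.
Qed.

Lemma cos_pos_of x V : 0 < V -> 0 < V * x -> 0 < x.
Proof. intros. nra. Qed.
Lemma cos_neg_of x V : 0 < V -> V * x < 0 -> x < 0.
Proof. intros. nra. Qed.

Lemma main_hyp x y T l k : Hyp x y T l k -> hyperbolic (Mo x y l T).
Proof.
  intros H. pose proof H as (Hx & Hy & HT & Hp & Hreg & Hl & Hk & Hlk & Hc).
  pose proof PI_RGT_0 as Hpi.
  set (M := Mo x y l T).
  assert (Hv : 0 < Derive x 0 ^ 2 + Derive y 0 ^ 2).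
  { destruct (Hreg 0) as [H1|H1]; [pose proof (pow2_gt_0 _ H1); pose proof (pow2_ge_0 (Derive y 0))|
      pose proof (pow2_gt_0 _ H1); pose proof (pow2_ge_0 (Derive x 0))]; lra. }
  destruct (polar _ _ Hv) as [al [HX HY]].
  set (V := sqrt (Derive x 0 ^ 2 + Derive y 0 ^ 2)) in *.
  assert (HV : 0 < V) by (apply sqrt_lt_R0; auto).
  assert (HW : forall th, W0 x y th = V * cos (th - al)).
  { intros th. unfold W0. rewrite cos_minus.
    transitivity (V * cos al * cos th + V * sin al * sin th). rewrite <- HX, <- HY. ring. ring. }
  set (cL := al - PI / 2). set (cR := al + PI / 2).
  assert (HWcL : W0 x y cL = 0). { rewrite HW. unfold cL. replace (al - PI / 2 - al) with (- (PI / 2)) by ring.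
    rewrite cos_neg, cos_PI2. ring. }
  assert (HWcR : W0 x y cR = 0). { rewrite HW. unfold cR. replace (al + PI / 2 - al) with (PI / 2) by ring.
    rewrite cos_PI2. ring. }
  assert (HAL := FA x y T l k cL H ltac:(lra)). rewrite HW in HAL. apply cos_pos_of in HAL; auto.
  assert (HAR := FA x y T l k cR H ltac:(lra)). rewrite HW in HAR. apply cos_pos_of in HAR; auto.
  destruct (arc_pos _ HAL) as [kk [s [Es Hs]]].
  destruct (arc_pos _ HAR) as [kk' [s' [Es' Hs']]].
  fold M in Es, Es'.
  assert (HM1 : M cL < M cR) by (apply (M_mono x y T l k); auto; unfold cL, cR; lra).
  assert (HM2 : M cR < M cL + 2 * PI).
  { replace (M cL + 2 * PI) with (M (cL + 2 * PI * IZR 1)) by (unfold M; rewrite (M_shift x y T l k); auto; simpl; ring).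
    apply (M_mono x y T l k); auto. unfold cL, cR; simpl; lra. }
  assert (Hkk : (kk' = kk \/ kk' = kk + 1)%Z).
  { assert (H1 : -1 < IZR (kk' - kk)).
    { rewrite minus_IZR. apply (Rmult_lt_reg_l (2 * PI)); [lra|]. nra. }
    assert (H2 : IZR (kk' - kk) < 2).
    { rewrite minus_IZR. apply (Rmult_lt_reg_l (2 * PI)); [lra|]. nra. }
    apply lt_IZR in H1. replace 2 with (IZR 2) in H2 by reflexivity. apply lt_IZR in H2. lia. }
  assert (Hkeq : kk' = kk).
  { destruct Hkk as [|Hk1]; auto. exfalso.
    set (ystar := al + PI / 2 + 2 * PI * IZR kk).
    destruct (IVT_gen M cL cR ystar (M_cont x y T l k H)) as [cs [Hcs Hmc]].
    { rewrite Rmin_left, Rmax_right by lra. rewrite Hk1, plus_IZR in Es'. unfold ystar.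
      split; simpl in Es'; nra. }
    rewrite Rmin_left, Rmax_right in Hcs by (unfold cL, cR; lra).
    assert (0 <= W0 x y cs). { rewrite HW. apply Rmult_le_pos; [lra|]. apply cos_ge_0; unfold cL, cR in Hcs; lra. }
    pose proof (FA x y T l k cs H H0). fold M in H1. rewrite Hmc in H1. unfold ystar in H1.
    rewrite W0_per, HW in H1. replace (al + PI / 2 - al) with (PI / 2) in H1 by ring. rewrite cos_PI2 in H1. lra. }
  subst kk'.
  set (F := fun c => M c - c - 2 * PI * IZR kk).
  assert (HF : continuity F).
  { intros c. unfold F. apply continuity_pt_minus. apply continuity_pt_minus. apply (M_cont x y T l k H).
    apply derivable_continuous_pt, derivable_pt_id. apply continuity_pt_const. intros u v; reflexivity. }
  assert (EL : M cL = al + s + 2 * PI * IZR kk) by lra.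
  assert (ER : M cR = al + s' + 2 * PI * IZR kk) by lra.
  assert (HFL : F cL = s + PI / 2). { unfold F. rewrite EL. unfold cL. ring. }
  assert (HFR : F cR = s' - PI / 2). { unfold F. rewrite ER. unfold cR. ring. }
  assert (HFL2 : F (cL + 2 * PI) = s + PI / 2).
  { unfold F. replace (M (cL + 2 * PI)) with (M (cL + 2 * PI * IZR 1)) by (f_equal; simpl; ring).
    unfold M. rewrite (M_shift x y T l k); auto. fold M. rewrite EL. unfold cL. simpl. ring. }
  (* attracting fixed point *)
  destruct (IVT_gen F cL cR 0 HF) as [a [Ha HFa]].
  { rewrite HFL, HFR. rewrite Rmin_right, Rmax_left; lra. }
  rewrite Rmin_left, Rmax_right in Ha by (unfold cL, cR; lra).
  assert (Ha' : cL < a < cR).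
  { split; [destruct (Req_dec a cL) as [E|]; [rewrite E, HFL in HFa; lra|lra]|
             destruct (Req_dec a cR) as [E|]; [rewrite E, HFR in HFa; lra|lra]]. }
  assert (HMa : M a = a + 2 * PI * IZR kk) by (unfold F in HFa; lra).
  assert (HWa : 0 < W0 x y a). { rewrite HW. apply Rmult_lt_0_compat; auto. apply cos_gt_0; unfold cL, cR in Ha'; lra. }
  (* repelling fixed point *)
  destruct (IVT_gen F cR (cL + 2 * PI) 0 HF) as [b [Hb HFb]].
  { rewrite HFL2, HFR. rewrite Rmin_left, Rmax_right; lra. }
  rewrite Rmin_left, Rmax_right in Hb by (unfold cL, cR; lra).
  assert (Hb' : cR < b < cL + 2 * PI).
  { split; [destruct (Req_dec b cR) as [E|]; [rewrite E, HFR in HFb; lra|lra]|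
             destruct (Req_dec b (cL + 2 * PI)) as [E|]; [rewrite E, HFL2 in HFb; lra|lra]]. }
  assert (HMb : M b = b + 2 * PI * IZR kk) by (unfold F in HFb; lra).
  assert (HWb : W0 x y b < 0). { rewrite HW. apply Rmult_pos_neg; auto. apply cos_lt_0; unfold cL, cR in Hb'; lra. }
  destruct (red_int a 0) as [na Hna]. destruct (red_int b 0) as [nb Hnb].
  set (a' := a + 2 * PI * IZR (- na)). set (b' := b + 2 * PI * IZR (- nb)).
  assert (Ea' : a' = a - 2 * PI * IZR na) by (unfold a'; rewrite opp_IZR; ring).
  assert (Eb' : b' = b - 2 * PI * IZR nb) by (unfold b'; rewrite opp_IZR; ring).
  assert (HMa' : M a' = a' + 2 * PI * IZR kk).
  { unfold a', M. rewrite (M_shift x y T l k); auto. fold M. rewrite HMa. ring. }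
  assert (HMb' : M b' = b' + 2 * PI * IZR kk).
  { unfold b', M. rewrite (M_shift x y T l k); auto. fold M. rewrite HMb. ring. }
  assert (HWa' : 0 < W0 x y a') by (unfold a'; rewrite W0_per; auto).
  assert (HWb' : W0 x y b' < 0) by (unfold b'; rewrite W0_per; auto).
  exists a', b'. split; [lra|]. split; [lra|]. split.
  { intros E. rewrite E in HWa'. lra. }
  split. { exists kk. exact HMa'. }
  split. { exists kk. exact HMb'. }
  split.
  {
    intros c Hc0 [m Hm]. fold M in Hm.
    assert (HWMc : W0 x y (M c) = W0 x y c) by (rewrite Hm, W0_per; reflexivity).
    destruct (Rle_or_lt 0 (W0 x y c)) as [Hpos|Hneg].
    - left. pose proof (FA x y T l k c H Hpos) as Hc1. fold M in Hc1. rewrite HWMc in Hc1.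
      rewrite HW in Hc1. apply cos_pos_of in Hc1; auto.
      destruct (arc_pos _ Hc1) as [j [sg [Esg Hsg]]].
      set (ct := c - 2 * PI * IZR j).
      assert (Hct : cL < ct < cR) by (unfold ct, cL, cR; lra).
      assert (HMct : M ct = ct + 2 * PI * IZR m).
      { unfold ct. replace (c - 2 * PI * IZR j) with (c + 2 * PI * IZR (- j)) by (rewrite opp_IZR; ring).
        unfold M. rewrite (M_shift x y T l k); auto. fold M. rewrite Hm, opp_IZR. ring. }
      assert (Eq : ct = a).
      { destruct (Rtotal_order ct a) as [Hlt|[Heq|Hgt]]; auto; exfalso.
        - assert (h1 : M a - a < M ct - ct).
          { apply (h_dec x y T l k ct a H Hlt). intros xi Hxi. rewrite HW. apply Rmult_le_pos; [lra|]. apply cos_ge_0; unfold cL, cR in *; lra. }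
          assert (h2 : M ct < M a) by (apply (M_mono x y T l k); auto).
          rewrite HMa, HMct in *.
          apply (int_gap_neg (kk - m)). rewrite minus_IZR. split; apply (Rmult_lt_reg_l (2 * PI)); unfold cL, cR in *; lra.
        - assert (h1 : M ct - ct < M a - a).
          { apply (h_dec x y T l k a ct H Hgt). intros xi Hxi. rewrite HW. apply Rmult_le_pos; [lra|]. apply cos_ge_0; unfold cL, cR in *; lra. }
          assert (h2 : M a < M ct) by (apply (M_mono x y T l k); auto).
          rewrite HMa, HMct in *.
          apply (int_gap_neg (m - kk)). rewrite minus_IZR. split; apply (Rmult_lt_reg_l (2 * PI)); unfold cL, cR in *; lra. }
      apply (same_mod c a' (j + na)); auto. rewrite Ea'; lra.
      rewrite Ea', plus_IZR. unfold ct in Eq. lra.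
    - right.
      assert (Hc1 : W0 x y (M c) < 0) by lra. rewrite HW in Hc1. apply cos_neg_of in Hc1; auto.
      destruct (arc_neg _ Hc1) as [j [sg [Esg Hsg]]].
      set (ct := c + 2 * PI * IZR (kk - j)).
      assert (HMct : M ct = al + sg + 2 * PI * IZR kk).
      { unfold ct, M. rewrite (M_shift x y T l k); auto. fold M. rewrite minus_IZR. lra. }
      assert (HMct2 : M ct = ct + 2 * PI * IZR m).
      { unfold ct, M. rewrite (M_shift x y T l k); auto. fold M. rewrite Hm. ring. }
      assert (Hwin : forall xi, Rmin ct b <= xi <= Rmax ct b -> W0 x y (M xi) <= 0).
      { intros xi Hxi. rewrite HW.
        assert (Hm1 : M (Rmin ct b) <= M xi) by (apply (M_le x y T l k); auto; lra).
        assert (Hm2 : M xi <= M (Rmax ct b)) by (apply (M_le x y T l k); auto; lra).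
        assert (Hlo : al + PI / 2 + 2 * PI * IZR kk < M (Rmin ct b)).
        { unfold Rmin. destruct (Rle_dec ct b); [rewrite HMct|rewrite HMb]; unfold cL, cR in *; lra. }
        assert (Hhi : M (Rmax ct b) < al + 3 * (PI / 2) + 2 * PI * IZR kk).
        { unfold Rmax. destruct (Rle_dec ct b); [rewrite HMb|rewrite HMct]; unfold cL, cR in *; lra. }
        apply Rmult_le_0_l; [lra|].
        replace (M xi - al) with ((M xi - al - 2 * PI * IZR kk) + 2 * PI * IZR kk) by ring.
        rewrite cosZ. apply cos_le_0; lra. }
      assert (Eq : ct = b).
      { destruct (Rtotal_order ct b) as [Hlt|[Heq|Hgt]]; auto; exfalso.
        - assert (h1' : M ct - ct < M b - b).
          { apply (h_inc x y T l k ct b H Hlt). intros xi Hxi. apply Hwin. rewrite Rmin_left, Rmax_right; lra. }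
          assert (hpi : M b - M ct < PI) by (rewrite HMct, HMb; unfold cL, cR in *; lra).
          rewrite HMb, HMct2 in h1', hpi.
          apply (int_gap_pos (kk - m)). rewrite minus_IZR. split; apply (Rmult_lt_reg_l (2 * PI)); lra.
        - assert (h1' : M b - b < M ct - ct).
          { apply (h_inc x y T l k b ct H Hgt). intros xi Hxi. apply Hwin. rewrite Rmin_right, Rmax_left; lra. }
          assert (hpi : M ct - M b < PI) by (rewrite HMct, HMb; unfold cL, cR in *; lra).
          rewrite HMb, HMct2 in h1', hpi.
          apply (int_gap_pos (m - kk)). rewrite minus_IZR. split; apply (Rmult_lt_reg_l (2 * PI)); lra. }
      apply (same_mod c b' (j - kk + nb)); auto. rewrite Eb'; lra.
      rewrite Eb', !plus_IZR, minus_IZR. unfold ct in Eq.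
      rewrite minus_IZR in Eq. lra. }
  split. { eexists. apply (M_deriv x y T l k); auto. }
  split. { eexists. apply (M_deriv x y T l k); auto. }
  split.
  - unfold M. rewrite (DM x y T l k a' H). unfold Eflow. rewrite Rabs_pos_eq by (left; apply exp_pos).
    fold (Eflow (Af y l) (Bf x l) a' T). apply (Eflow_lt1 x y T l k); auto.
    rewrite (wf_0 x y T l k a' H). fold (W0 x y a'). lra.
  - unfold M. rewrite (DM x y T l k b' H). unfold Eflow. rewrite Rabs_pos_eq by (left; apply exp_pos).
    fold (Eflow (Af y l) (Bf x l) b' T). apply (Eflow_gt1 x y T l k); auto.
    rewrite (wf_T x y T l k b' H). fold (W0 x y (Mo x y l T b')). fold M. rewrite HMb', W0_per. lra.
Qed.

Theorem lemma4p1 (x y : R -> R) (T l : R) :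
  smooth_closed_curve x y T ->
  traversed_once x y T ->
  strictly_convex x y ->
  0 < l ->
  (exists kmax : R,
     (forall t, curvature x y t <= kmax) /\
     (exists t0, curvature x y t0 = kmax) /\
     l < 1 / kmax) ->
  hyperbolic (monodromy x y l T).
Proof.
  intros [HT [Hx [Hy [Hp Hreg]]]] _ _ Hl [k [Hcb [[t0 Ht0] Hlk]]].
  assert (Hc0 : 0 <= curvature x y t0).
  { unfold curvature. cbv zeta. apply Rmult_le_pos. apply Rabs_pos.
    assert (Hv : 0 < Derive x t0 ^ 2 + Derive y t0 ^ 2).
    { destruct (Hreg t0) as [H1|H1]; [pose proof (pow2_gt_0 _ H1); pose proof (pow2_ge_0 (Derive y t0))|
        pose proof (pow2_gt_0 _ H1); pose proof (pow2_ge_0 (Derive x t0))]; lra. }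
    left. apply Rinv_0_lt_compat. apply Rmult_lt_0_compat; auto. apply sqrt_lt_R0; auto. }
  assert (Hk : 0 < k).
  { destruct (Rle_lt_or_eq_dec 0 k) as [|Hk0]; [lra|auto|].
    rewrite <- Hk0 in Hlk. unfold Rdiv in Hlk. rewrite Rinv_0, Rmult_0_r in Hlk. lra. }
  assert (Hlk' : l * k < 1).
  { apply (Rmult_lt_compat_r k) in Hlk; auto. unfold Rdiv in Hlk.
    rewrite Rmult_1_l, Rinv_l in Hlk by lra. exact Hlk. }
  assert (H : Hyp x y T l k) by (repeat split; auto; apply Hp).
  rewrite (monodromy_eq x y l T Hx Hy Hl).
  exact (main_hyp x y T l k H).
Qed.
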